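(* Let $u(\mathbf{x},\Gamma_{\epsilon\boldsymbol{\omega}})$ be the total field of the impenetrable scattering problem with the randomly perturbed boundary $\Gamma_{\epsilon\boldsymbol{\omega}}=\Gamma+\epsilon\sum_{j=1}^m\omega_j\mathbf{v}_j$, and write $\delta_{\mathbf{v}_i}u$, $\delta_{[\mathbf{v}_i,\mathbf{v}_j]}u$ for its shape derivatives at $\Gamma$ (which coincide with those of the scattered field). Then, for $\mathbf{x}$ in the exterior of the (perturbed) scatterers, as $\epsilon\to0$: (i) $\mathbb{M}_0^1[u](\mathbf{x})=0$; (ii) $\mathbb{M}_0^2[u](\mathbf{x})=\frac{\epsilon^2}{3}\sum_{i=1}^m(\delta_{\mathbf{v}_i}u(\mathbf{x}))^2+\mathcal{O}(\epsilon^4)$; (iii) if $n$ is a positive even integer, $\mathbb{M}_0^n[u](\mathbf{x})=\epsilon^n\,\mathbb{E}\Big[\Big(\sum_{i=1}^m\omega_i\delta_{\mathbf{v}_i}u(\mathbf{x})\Big)^n\Big]+\mathcal{O}(\epsilon^{n+2})$; (iv) if $n$ is a positive odd integer, $$\mathbb{M}_0^n[u](\mathbf{x})=\epsilon^{n+1}\binom n1\mathbb{E}\Big[\Big(\sum_{i=1}^m\omega_i\delta_{\mathbf{v}_i}u(\mathbf{x})\Big)^{n-1}\Big(\frac1{2!}\sum_{i,j=1}^m\omega_i\omega_j\delta_{[\mathbf{v}_i,\mathbf{v}_j]}u(\mathbf{x})-\frac1{3!}\sum_{i=1}^m\delta_{[\mathbf{v}_i,\mathbf{v}_i]}u(\m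athbf{x})\Big)\Big]+\mathcal{O}(\epsilon^{n+3}).$$
   Context: $D\subset\mathbb{R}^2$ is a bounded simply connected open set with smooth boundary $\Gamma$. For a boundary $\Gamma'$, the total field $u_{\rm tot}(\cdot,\Gamma')=\phi+u(\cdot,\Gamma')$ (with $\phi$ a plane wave or point-source incident field independent of the boundary) satisfies $\nabla\cdot\alpha\nabla u_{\rm tot}+k^2u_{\rm tot}=0$ ($\alpha>0$, $k>0$ constants) outside the scatterer bounded by $\Gamma'$, with a sound-soft, sound-hard, or impedance boundary condition on $\Gamma'$, the scattered field satisfying the Sommerfeld radiation condition. The velocity fields $\mathbf{v}_1,\dots,\mathbf{v}_m\in C^\infty(\mathbb{R}^2,\mathbb{R}^2)$ have compact support in a band around $\Gamma$; shape derivatives of order $\ge1$ of the total and scattered fields coincide, and the field is assumed to admit the multivariate shape Taylor expansion $u(\mathbf{x},\Gamma_{\epsilon\boldsymbol\omega})=u(\mathbf{x},\Gamma)+\sum_{q=1}^{N}\frac{\epsilon^q}{q!}\sum_{i_1,\dots,i_q=1}^m\big(\prod_{j=1}^q\omega_{i_j}\big)\delta_{[\mathbf{v}_{i_1},\dots,\mathbf{v}_{i_q}]}u(\mathbf{x})+\mathcal{O}(\epsilon^{N+1})$ uniformly in $\boldsymbol\omega$. The random vector $\boldsymbol\omega=(\omega_1,\dots,\omega_m)$ has independent components uniformly distributed on $[-1,1]$, with density $P$; $\mathbb{E}$ denotes expectation with respect to $P$. Central moments: $\mathbb{M}_0^n[u](\mathbf{x})=\int\big(u(\mathbf{x},\Gamma_{\epsilon\boldsymbol\omega})-\mathbb{E}[u](\mathbf{x})\big)^nP(\boldsymbol\omega)\,d\boldsymbol\omega$,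 where $\mathbb{E}[u](\mathbf{x})=\int u(\mathbf{x},\Gamma_{\epsilon\boldsymbol\omega})P(\boldsymbol\omega)\,d\boldsymbol\omega$. *)

(* Defs.v *)
From Stdlib Require Import Reals List Factorial.
From Coquelicot Require Import Coquelicot.
Open Scope R_scope.

Fixpoint csum (m : nat) (h : nat -> C) : C :=
  match m with O => RtoC 0 | S k => Cplus (csum k h) (h k) end.

(** Sum over all multi-indices (i_1,...,i_q) in {0,...,m-1}^q, represented
    as lists of length q:  msum q m g = \sum_{i_1..i_q} g [i_1;...;i_q]. *)
Fixpoint msum (q m : nat) (g : list nat -> C) : C :=
  match q with
  | O => g nil
  | S k => csum m (fun i => msum k m (fun l => g (i :: l)))
  end.

Definition omprod (w : nat -> R) (l : list nat) : R :=
  fold_right (fun i acc => w i * acc) 1 l.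

(** Random vectors omega = (omega_0, ..., omega_{m-1}) are encoded as
    sequences w : nat -> R, only the first m coordinates being relevant. *)
Definition upd (w : nat -> R) (k : nat) (t : R) : nat -> R :=
  fun i => if Nat.eqb i k then t else w i.

(** Expectation w.r.t. the density P of m independent U[-1,1] variables:
    iterated integral  \int_{[-1,1]^m} f(w) 2^{-m} dw  (coordinates < k
    are integrated out; remaining coordinates are set to 0). *)
Fixpoint iterE (k : nat) (f : (nat -> R) -> C) : C :=
  match k with
  | O => f (fun _ => 0)
  | S j => Cmult (RtoC (/ 2))
             (RInt (V := C_R_CompleteNormedModule)
                (fun t => iterE j (fun w => f (upd w j t))) (-1) 1)
  end.

Definition Expect (m : nat) (f : (nat -> R) -> C) : C := iterE m f.

Definition Mcentral (m n : nat) (u : (nat -> R) -> C) : C :=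
  Expect m (fun w => Cpow (Cminus (u w) (Expect m u)) n).

Definition in_box (m : nat) (w : nat -> R) : Prop :=
  forall i, (i < m)%nat -> -1 <= w i <= 1.

Fixpoint taylor_terms (N m : nat) (D : list nat -> C) (eps : R)
    (w : nat -> R) : C :=
  match N with
  | O => RtoC 0
  | S q => Cplus (taylor_terms q m D eps w)
      (Cmult (RtoC (eps ^ S q / INR (fact (S q))))
         (msum (S q) m (fun l => Cmult (RtoC (omprod w l)) (D l))))
  end.

Definition bigO_eps (f g : R -> C) (k : nat) : Prop :=
  exists K e0, 0 < e0 /\
    forall eps, 0 < eps < e0 -> Cmod (Cminus (f eps) (g eps)) <= K * eps ^ k.

(* Main.v *)
Require Import Defs.
From Stdlib Require Import Reals List Factorial Lra Lia FunctionalExtensionality Classical ClassicalEpsilon.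
From Coquelicot Require Import Coquelicot.
Open Scope R_scope.

Lemma is_RInt_Cmult (c : C) (h : R -> C) a b (l : C) :
  is_RInt (V:=C_R_NormedModule) h a b l ->
  is_RInt (V:=C_R_NormedModule) (fun t => Cmult c (h t)) a b (Cmult c l).
Proof.
  intros H.
  assert (H1 := is_RInt_fct_extend_fst (U:=R_NormedModule) (V:=R_NormedModule) h a b l H).
  assert (H2 := is_RInt_fct_extend_snd (U:=R_NormedModule) (V:=R_NormedModule) h a b l H).
  destruct c as [cr ci].
  assert (E1 := is_RInt_minus _ _ _ _ _ _ (is_RInt_scal _ _ _ cr _ H1) (is_RInt_scal _ _ _ ci _ H2)).
  assert (E2 := is_RInt_plus _ _ _ _ _ _ (is_RInt_scal _ _ _ cr _ H2) (is_RInt_scal _ _ _ ci _ H1)).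
  pose (f := fun t => Cmult (cr,ci) (h t)).
  assert (E1' : is_RInt (V:=R_NormedModule) (fun t => fst (f t)) a b (minus (scal cr (fst l)) (scal ci (snd l)))).
  { eapply is_RInt_ext; [|exact E1]. intros x _. unfold f. destruct (h x) as [p q]. simpl.
    unfold minus, plus, opp, scal; simpl. unfold mult; simpl. ring_simplify. unfold plus, opp; simpl. ring. }
  assert (E2' : is_RInt (V:=R_NormedModule) (fun t => snd (f t)) a b (plus (scal cr (snd l)) (scal ci (fst l)))).
  { eapply is_RInt_ext; [|exact E2]. intros x _. unfold f. destruct (h x) as [p q]. simpl.
    unfold plus, scal; simpl. unfold mult; simpl. unfold plus; simpl. ring. }
  assert (P := is_RInt_fct_extend_pair (U:=R_NormedModule) (V:=R_NormedModule) f a b _ _ E1' E2').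
  replace (Cmult (cr, ci) l) with ((minus (scal cr (fst l)) (scal ci (snd l)) : R), (plus (scal cr (snd l)) (scal ci (fst l)) : R)).
  - exact P.
  - destruct l as [p q]. simpl. unfold minus, plus, opp, scal; simpl. unfold mult, plus, opp; simpl.
    unfold Cmult; simpl. f_equal; ring.
Qed.

Lemma norm_Cmod (z : C) : norm (K:=R_AbsRing) (V:=C_R_NormedModule) z = Cmod z.
Proof. rewrite Cmod_norm. reflexivity. Qed.

Lemma upd_box j w t : in_box j w -> -1 <= t <= 1 -> in_box (S j) (upd w j t).
Proof.
  intros Hw Ht i Hi. unfold upd. destruct (Nat.eqb i j) eqn:E.
  - exact Ht.
  - apply Nat.eqb_neq in E. apply Hw. lia.
Qed.

Lemma open_int t : Rmin (-1) 1 < t < Rmax (-1) 1 -> -1 <= t <= 1.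
Proof.
  rewrite Rmin_left by lra. rewrite Rmax_right by lra. lra.
Qed.

Lemma iterE_ext k : forall f g, (forall w, in_box k w -> f w = g w) -> iterE k f = iterE k g.
Proof.
  induction k as [|j IH]; intros f g H; simpl.
  - apply H. intros i Hi; lia.
  - f_equal. apply RInt_ext. intros t Ht. apply IH. intros w Hw. apply H.
    apply upd_box; auto. apply open_int; auto.
Qed.

Fixpoint Iok (k : nat) (f : (nat -> R) -> C) : Prop :=
  match k with
  | O => True
  | S j => (forall t, -1 <= t <= 1 -> Iok j (fun w => f (upd w j t))) /\
           ex_RInt (V:=C_R_NormedModule) (fun t => iterE j (fun w => f (upd w j t))) (-1) 1
  end.

Lemma Iok_ext k : forall f g, (forall w, in_box k w -> f w = g w) -> Iok k f -> Iok k g.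
Proof.
  induction k as [|j IH]; intros f g H Hf; simpl; auto.
  destruct Hf as [H1 H2]. split.
  - intros t Ht. apply (IH (fun w => f (upd w j t))); auto.
    intros w Hw. apply H. apply upd_box; auto.
  - eapply ex_RInt_ext; [|exact H2]. intros t Ht. simpl. apply iterE_ext.
    intros w Hw; apply H. apply upd_box; auto. apply open_int; auto.
Qed.

Lemma C_half_two (c : C) : Cmult (RtoC (/2)) (scal (1 - -1) c) = c.
Proof.
  rewrite scal_R_Cmult. rewrite Cmult_assoc. rewrite <- RtoC_mult.
  replace (/2 * (1 - -1)) with 1 by field. apply Cmult_1_l.
Qed.

Lemma iterE_const k : forall c, iterE k (fun _ => c) = c.
Proof.
  induction k as [|j IH]; intros c; simpl; auto.
  rewrite (RInt_ext (V:=C_R_CompleteNormedModule) _ (fun _ => c)). 2:{ intros; apply IH. }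
  rewrite RInt_const. apply C_half_two.
Qed.

Lemma Iok_const k : forall c, Iok k (fun _ => c).
Proof.
  induction k as [|j IH]; intros c; simpl; auto. split; auto.
  eapply ex_RInt_ext with (f := fun _ => (c : C_R_NormedModule)). intros; rewrite iterE_const; auto.
  apply ex_RInt_const.
Qed.

Lemma iterE_plus k : forall f g, Iok k f -> Iok k g ->
  Iok k (fun w => Cplus (f w) (g w)) /\ iterE k (fun w => Cplus (f w) (g w)) = Cplus (iterE k f) (iterE k g).
Proof.
  induction k as [|j IH]; intros f g Hf Hg; simpl; auto.
  destruct Hf as [Hf1 Hf2]; destruct Hg as [Hg1 Hg2].
  assert (Hx : forall t, Rmin (-1) 1 < t < Rmax (-1) 1 ->
     Cplus (iterE j (fun w => f (upd w j t))) (iterE j (fun w => g (upd w j t)))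
     = iterE j (fun w => Cplus (f (upd w j t)) (g (upd w j t)))).
  { intros t Ht. symmetry. apply IH; apply open_int in Ht; auto. }
  split. split.
  - intros t Ht. apply IH; auto.
  - eapply (ex_RInt_ext (V:=C_R_NormedModule) (fun t => Cplus (iterE j (fun w => f (upd w j t))) (iterE j (fun w => g (upd w j t))))); [exact Hx|]. exact (ex_RInt_plus (V:=C_R_NormedModule) _ _ _ _ Hf2 Hg2).
  - rewrite <- (RInt_ext (V:=C_R_CompleteNormedModule) (fun t => Cplus (iterE j (fun w => f (upd w j t))) (iterE j (fun w => g (upd w j t)))) _ _ _ Hx). 
    set (h1 := fun t => iterE j (fun w => f (upd w j t))) in *.
    set (h2 := fun t => iterE j (fun w => g (upd w j t))) in *.
    assert (E : RInt (V:=C_R_CompleteNormedModule) (fun t => Cplus (h1 t) (h2 t)) (-1) 1 = 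
       Cplus (RInt (V:=C_R_CompleteNormedModule) h1 (-1) 1) (RInt (V:=C_R_CompleteNormedModule) h2 (-1) 1))
      by exact (RInt_plus (V:=C_R_CompleteNormedModule) _ _ _ _ Hf2 Hg2).
    unfold h1, h2 in E; cbv beta in E. rewrite E. unfold h1, h2. ring.
Qed.

Lemma iterE_scal k : forall (c : C) f, Iok k f ->
  Iok k (fun w => Cmult c (f w)) /\ iterE k (fun w => Cmult c (f w)) = Cmult c (iterE k f).
Proof.
  induction k as [|j IH]; intros c f Hf; simpl; auto.
  destruct Hf as [Hf1 Hf2].
  assert (Hx : forall t, Rmin (-1) 1 < t < Rmax (-1) 1 ->
     Cmult c (iterE j (fun w => f (upd w j t)))
     = iterE j (fun w => Cmult c (f (upd w j t)))).
  { intros t Ht. symmetry. apply IH; apply open_int in Ht; auto. }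
  destruct Hf2 as [l Hl].
  assert (Hc := is_RInt_Cmult c _ _ _ _ Hl).
  split. split.
  - intros t Ht. apply IH; auto.
  - eexists. eapply (is_RInt_ext (V:=C_R_NormedModule) (fun t => Cmult c (iterE j (fun w => f (upd w j t))))); [exact Hx|]. exact Hc.
  - rewrite <- (RInt_ext (V:=C_R_CompleteNormedModule) (fun t => Cmult c (iterE j (fun w => f (upd w j t)))) _ _ _ Hx). rewrite (is_RInt_unique (V:=C_R_CompleteNormedModule) _ _ _ _ Hc).
    rewrite (is_RInt_unique (V:=C_R_CompleteNormedModule) _ _ _ _ Hl). ring.
Qed.

Lemma Cm1 : RtoC (-1) = Copp (RtoC 1).
Proof. unfold RtoC, Copp; simpl. f_equal; ring. Qed.

Lemma iterE_minus k f g : Iok k f -> Iok k g ->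
  Iok k (fun w => Cminus (f w) (g w)) /\ iterE k (fun w => Cminus (f w) (g w)) = Cminus (iterE k f) (iterE k g).
Proof.
  intros Hf Hg.
  destruct (iterE_scal k (RtoC (-1)) g Hg) as [H1 E1].
  destruct (iterE_plus k f _ Hf H1) as [H2 E2].
  assert (Heq : forall w, in_box k w -> Cplus (f w) (Cmult (RtoC (-1)) (g w)) = Cminus (f w) (g w)).
  { intros; rewrite Cm1; ring. }
  split.
  - eapply Iok_ext; [exact Heq|exact H2].
  - rewrite <- (iterE_ext _ _ _ Heq). rewrite E2, E1. rewrite Cm1; ring.
Qed.

Lemma iterE_bound k : forall f M, Iok k f -> (forall w, in_box k w -> Cmod (f w) <= M) ->
  Cmod (iterE k f) <= M.
Proof.
  induction k as [|j IH]; intros f M Hf HM; simpl.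
  - apply HM. intros i Hi; lia.
  - destruct Hf as [Hf1 Hf2].
    rewrite Cmod_mult, Cmod_R. rewrite Rabs_right by lra.
    assert (Hb : forall t, -1 <= t <= 1 -> norm (K:=R_AbsRing) (V:=C_R_NormedModule) (iterE j (fun w => f (upd w j t))) <= M).
    { intros t Ht; rewrite norm_Cmod; apply IH; [apply Hf1; auto|]. intros w Hw; apply HM; apply upd_box; auto. }
    assert (B := norm_RInt_le_const (V:=C_R_NormedModule) _ (-1) 1 _ M ltac:(lra) Hb
       (RInt_correct (V:=C_R_CompleteNormedModule) _ _ _ Hf2)).
    rewrite norm_Cmod in B.
    lra.
Qed.

Lemma iterE_sym k : forall (s : nat -> R) f, (forall i, s i = 1 \/ s i = -1) -> Iok k f ->
  iterE k (fun w => f (fun i => s i * w i)) = iterE k f.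
Proof.
  induction k as [|j IH]; intros s f Hs Hf; simpl.
  - f_equal. apply functional_extensionality; intros; ring.
  - destruct Hf as [Hf1 Hf2]. f_equal.
    set (h := fun t => iterE j (fun w => f (upd w j t))).
    assert (Hst : forall t, -1 <= t <= 1 -> -1 <= s j * t <= 1).
    { intros t Ht; destruct (Hs j) as [E|E]; rewrite E; lra. }
    rewrite (RInt_ext (V:=C_R_CompleteNormedModule) _ (fun t => h (s j * t))).
    2:{ intros t Ht. apply open_int in Ht. unfold h.
        rewrite <- (IH s (fun w => f (upd w j (s j * t)))); auto.
        f_equal. apply functional_extensionality; intros w. f_equal.
        apply functional_extensionality; intros i. unfold upd.
        destruct (Nat.eqb i j) eqn:E; auto. apply Nat.eqb_eq in E; subst; auto. }
    destruct (Hs j) as [E|E]; rewrite E.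
    + apply RInt_ext. intros; f_equal; ring.
    + destruct Hf2 as [l Hl]. fold h in Hl. rewrite (is_RInt_unique (V:=C_R_CompleteNormedModule) _ _ _ _ Hl).
      apply is_RInt_unique.
      assert (H1 : is_RInt (V:=C_R_NormedModule) h (- (1)) (- (-1)) l).
      { replace (- (1)) with (-1) by ring. replace (- (-1)) with 1 by ring. exact Hl. }
      apply is_RInt_comp_opp in H1. apply is_RInt_swap in H1. apply is_RInt_opp in H1.
      rewrite opp_opp in H1. eapply is_RInt_ext; [|exact H1].
      intros t _. cbv beta. rewrite opp_opp. f_equal; ring.
Qed.

Definition UCk k (f : (nat -> R) -> C) := forall r, 0 < r -> exists d, 0 < d /\
  forall w w', in_box k w -> in_box k w' -> (forall i, (i < k)%nat -> Rabs (w' i - w i) < d) ->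
    Cmod (Cminus (f w') (f w)) < r.

Lemma UC_upd j f t : UCk (S j) f -> -1 <= t <= 1 -> UCk j (fun w => f (upd w j t)).
Proof.
  intros H Ht r Hr. destruct (H r Hr) as [d [Hd Hu]]. exists d; split; auto.
  intros w w' Hw Hw' Hc. apply Hu; try (apply upd_box; auto).
  intros i Hi. unfold upd. destruct (Nat.eqb i j) eqn:E.
  - replace (t - t) with 0 by ring. rewrite Rabs_R0; auto.
  - apply Nat.eqb_neq in E. apply Hc. lia.
Qed.

Definition clamp t := Rmax (-1) (Rmin 1 t).

Lemma clamp_in t : -1 <= clamp t <= 1.
Proof. unfold clamp, Rmax, Rmin. repeat destruct Rle_dec; lra. Qed.

Lemma clamp_id t : -1 <= t <= 1 -> clamp t = t.
Proof. intros. unfold clamp, Rmax, Rmin. repeat destruct Rle_dec; lra. Qed.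

Lemma clamp_lip y z : Rabs (clamp y - clamp z) <= Rabs (y - z).
Proof. unfold clamp, Rmax, Rmin. repeat destruct Rle_dec; unfold Rabs; repeat destruct Rcase_abs; lra. Qed.

Lemma UC_Iok k : forall f, UCk k f -> Iok k f.
Proof.
  induction k as [|j IH]; intros f Hf; simpl; auto.
  split.
  - intros t Ht. apply IH. apply UC_upd; auto.
  - set (h := fun t => iterE j (fun w => f (upd w j t))).
    apply (ex_RInt_ext (V:=C_R_NormedModule) (fun t => h (clamp t))).
    { intros t Ht. apply open_int in Ht. rewrite clamp_id; auto. }
    apply (ex_RInt_continuous (V:=C_R_CompleteNormedModule)). intros z _.
    unfold continuous. apply filterlim_locally. intros eps.
    destruct (Hf (eps/2)) as [d [Hd HU]]. { destruct eps; simpl; lra. }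
    exists (mkposreal d Hd). intros y Hy.
    assert (Hy' : Rabs (y - z) < d).
    { unfold ball in Hy; simpl in Hy; unfold AbsRing_ball, abs, minus, plus, opp in Hy; simpl in Hy. exact Hy. }
    apply (norm_compat1 (V:=C_R_NormedModule)).
    rewrite norm_Cmod. change (minus (h (clamp y)) (h (clamp z))) with (Cminus (h (clamp y)) (h (clamp z))).
    unfold h.
    assert (I1 := IH _ (UC_upd j f (clamp y) Hf (clamp_in y))).
    assert (I2 := IH _ (UC_upd j f (clamp z) Hf (clamp_in z))).
    destruct (iterE_minus j _ _ I1 I2) as [_ E]. rewrite <- E.
    apply Rle_lt_trans with (eps/2); [|destruct eps; simpl; lra].
    apply iterE_bound.
    + apply iterE_minus; auto.
    + intros w Hw. left. apply HU; try (apply upd_box; auto; apply clamp_in).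
      intros i Hi. unfold upd. destruct (Nat.eqb i j) eqn:E'.
      * eapply Rle_lt_trans; [apply clamp_lip|]. exact Hy'.
      * replace (w i - w i) with 0 by ring. rewrite Rabs_R0; auto.
Qed.

Fixpoint toF (n : nat) : Compactness.Tn n R -> nat -> R :=
  match n return Compactness.Tn n R -> nat -> R with
  | O => fun _ _ => 0
  | S n' => fun x i => match i with O => fst x | S i' => toF n' (snd x) i' end
  end.

Fixpoint fromF (n : nat) (w : nat -> R) : Compactness.Tn n R :=
  match n return Compactness.Tn n R with
  | O => tt
  | S n' => (w O, fromF n' (fun i => w (S i)))
  end.

Lemma toF_fromF n : forall w i, (i < n)%nat -> toF n (fromF n w) i = w i.
Proof.
  induction n as [|n IH]; intros w i Hi; [lia|].
  destruct i; simpl; auto. rewrite IH; auto. lia.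
Qed.

Lemma bounded_fromF n : forall w, in_box n w ->
  bounded_n n (fromF n (fun _ => -1)) (fromF n (fun _ => 1)) (fromF n w).
Proof.
  induction n as [|n IH]; intros w Hw; simpl; auto.
  split. apply (Hw 0%nat); lia.
  apply IH. intros i Hi. apply Hw. lia.
Qed.

Lemma bounded_toF n : forall t,
  bounded_n n (fromF n (fun _ => -1)) (fromF n (fun _ => 1)) t -> in_box n (toF n t).
Proof.
  induction n as [|n IH]; intros t Ht i Hi; [lia|].
  destruct t as [t1 t2]. simpl in Ht. destruct Ht as [Ht1 Ht2].
  destruct i; simpl; auto. apply IH; auto. lia.
Qed.

Lemma close_toF n : forall e x t, close_n n e x t ->
  forall i, (i < n)%nat -> Rabs (toF n x i - toF n t i) < e.
Proof.
  induction n as [|n IH]; intros e x t H i Hi; [lia|].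
  destruct x as [x1 x2]; destruct t as [t1 t2]. simpl in H. destruct H as [H1 H2].
  destruct i; simpl; auto. apply IH; auto. lia.
Qed.

Lemma Cmod_tri3 a b c : Cmod (Cminus a b) <= Cmod (Cminus a c) + Cmod (Cminus b c).
Proof.
  replace (Cminus a b) with (Cplus (Cminus a c) (Copp (Cminus b c))) by ring.
  eapply Rle_trans; [apply Cmod_triangle|]. rewrite Cmod_opp. lra.
Qed.

Lemma heine_cantor k f :
  (forall w, in_box k w -> forall r, 0 < r -> exists d, 0 < d /\
     forall w', in_box k w' -> (forall i, (i < k)%nat -> Rabs (w' i - w i) < d) ->
       Cmod (Cminus (f w') (f w)) < r) -> UCk k f.
Proof.
  intros Hc r Hr.
  assert (Hex : forall t : Compactness.Tn k R, exists d, 0 < d /\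
    (in_box k (toF k t) -> forall w', in_box k w' -> (forall i, (i < k)%nat -> Rabs (w' i - toF k t i) < d) ->
       Cmod (Cminus (f w') (f (toF k t))) < r/2)).
  { intros t. destruct (classic (in_box k (toF k t))) as [Hb|Hb].
    - destruct (Hc _ Hb (r/2)) as [d [Hd H]]; [lra|]. exists d; split; auto.
    - exists 1; split; [lra|]. intros; contradiction. }
  pose (dd := fun t => proj1_sig (constructive_indefinite_description _ (Hex t))).
  assert (Hdd : forall t, 0 < dd t /\ (in_box k (toF k t) -> forall w', in_box k w' -> (forall i, (i < k)%nat -> Rabs (w' i - toF k t i) < dd t) ->
       Cmod (Cminus (f w') (f (toF k t))) < r/2)).
  { intros t. unfold dd. destruct (constructive_indefinite_description _ (Hex t)) as [x Hx]. simpl. exact Hx. }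
  pose (delta := fun t => mkposreal (dd t / 2) ltac:(destruct (Hdd t); lra)).
  destruct (compactness_value k (fromF k (fun _ => -1)) (fromF k (fun _ => 1)) delta) as [d0 Hd0].
  exists d0. split; [apply cond_pos|].
  intros w w' Hw Hw' Hcl.
  apply NNPP. intros Hn.
  apply (Hd0 (fromF k w) (bounded_fromF k w Hw)). intros [t [Hbt [Hct Hle]]]. apply Hn.
  assert (Htb := bounded_toF k t Hbt).
  destruct (Hdd t) as [Hpos Ht].
  assert (C1 := close_toF k _ _ _ Hct). simpl in C1, Hle.
  assert (A1 : Cmod (Cminus (f w) (f (toF k t))) < r/2).
  { apply Ht; auto. intros i Hi. specialize (C1 i Hi). rewrite toF_fromF in C1; auto. lra. }
  assert (A2 : Cmod (Cminus (f w') (f (toF k t))) < r/2).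
  { apply Ht; auto. intros i Hi. specialize (C1 i Hi). rewrite toF_fromF in C1; auto.
    specialize (Hcl i Hi).
    replace (w' i - toF k t i) with ((w' i - w i) + (w i - toF k t i)) by ring.
    eapply Rle_lt_trans; [apply Rabs_triang|]. lra. }
  eapply Rle_lt_trans; [apply (Cmod_tri3 _ _ (f (toF k t)))|]. lra.
Qed.

Definition Bdk k (f : (nat -> R) -> C) := exists M, forall w, in_box k w -> Cmod (f w) <= M.
Definition good k f := UCk k f /\ Bdk k f.

Lemma Cmod_RtoC_minus a b : Cmod (Cminus (RtoC a) (RtoC b)) = Rabs (a - b).
Proof. rewrite <- Cmod_R. f_equal. unfold Cminus, RtoC, Cplus, Copp; simpl. f_equal; ring. Qed.

Lemma good_ext k f g : (forall w, in_box k w -> f w = g w) -> good k f -> good k g.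
Proof.
  intros H [Hu [M HM]]. split.
  - intros r Hr. destruct (Hu r Hr) as [d [Hd Hd']]. exists d; split; auto.
    intros w w' Hw Hw' Hc. rewrite <- !H by auto. auto.
  - exists M. intros w Hw. rewrite <- H; auto.
Qed.

Lemma good_const k c : good k (fun _ => c).
Proof.
  split.
  - intros r Hr. exists 1; split; [lra|]. intros. replace (Cminus c c) with (RtoC 0) by ring.
    rewrite Cmod_0; auto.
  - exists (Cmod c). intros; lra.
Qed.

Lemma good_coord k i : (i < k)%nat -> good k (fun w => RtoC (w i)).
Proof.
  intros Hi. split.
  - intros r Hr. exists r; split; auto. intros w w' Hw Hw' Hc. rewrite Cmod_RtoC_minus. auto.
  - exists 1. intros w Hw. rewrite Cmod_R. specialize (Hw i Hi). unfold Rabs; destruct Rcase_abs; lra.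
Qed.

Lemma good_plus k f g : good k f -> good k g -> good k (fun w => Cplus (f w) (g w)).
Proof.
  intros [Hf [Mf HMf]] [Hg [Mg HMg]]. split.
  - intros r Hr. destruct (Hf (r/2)) as [d1 [Hd1 H1]]; [lra|].
    destruct (Hg (r/2)) as [d2 [Hd2 H2]]; [lra|].
    exists (Rmin d1 d2). split. { apply Rmin_pos; auto. }
    intros w w' Hw Hw' Hc.
    replace (Cminus (Cplus (f w') (g w')) (Cplus (f w) (g w))) with
      (Cplus (Cminus (f w') (f w)) (Cminus (g w') (g w))) by ring.
    eapply Rle_lt_trans; [apply Cmod_triangle|].
    assert (Cmod (Cminus (f w') (f w)) < r/2).
    { apply H1; auto. intros i Hi. eapply Rlt_le_trans; [apply Hc; auto|apply Rmin_l]. }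
    assert (Cmod (Cminus (g w') (g w)) < r/2).
    { apply H2; auto. intros i Hi. eapply Rlt_le_trans; [apply Hc; auto|apply Rmin_r]. }
    lra.
  - exists (Mf + Mg). intros w Hw. eapply Rle_trans; [apply Cmod_triangle|].
    specialize (HMf w Hw); specialize (HMg w Hw); lra.
Qed.

Lemma good_mult k f g : good k f -> good k g -> good k (fun w => Cmult (f w) (g w)).
Proof.
  intros [Hf [Mf HMf]] [Hg [Mg HMg]].
  set (A := Rabs Mf + 1). set (B := Rabs Mg + 1).
  assert (HA : 0 < A) by (unfold A; pose proof (Rabs_pos Mf); lra).
  assert (HB : 0 < B) by (unfold B; pose proof (Rabs_pos Mg); lra).
  assert (HMf' : forall w, in_box k w -> Cmod (f w) <= A).
  { intros w Hw; specialize (HMf w Hw); unfold A; pose proof (Rle_abs Mf); lra. }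
  assert (HMg' : forall w, in_box k w -> Cmod (g w) <= B).
  { intros w Hw; specialize (HMg w Hw); unfold B; pose proof (Rle_abs Mg); lra. }
  split.
  - intros r Hr. destruct (Hf (r/(2*B))) as [d1 [Hd1 H1]]. { apply Rdiv_lt_0_compat; lra. }
    destruct (Hg (r/(2*A))) as [d2 [Hd2 H2]]. { apply Rdiv_lt_0_compat; lra. }
    exists (Rmin d1 d2). split. { apply Rmin_pos; auto. }
    intros w w' Hw Hw' Hc.
    replace (Cminus (Cmult (f w') (g w')) (Cmult (f w) (g w))) with
      (Cplus (Cmult (f w') (Cminus (g w') (g w))) (Cmult (g w) (Cminus (f w') (f w)))) by ring.
    eapply Rle_lt_trans; [apply Cmod_triangle|]. rewrite !Cmod_mult.
    assert (E1 : Cmod (Cminus (f w') (f w)) < r/(2*B)).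
    { apply H1; auto. intros i Hi. eapply Rlt_le_trans; [apply Hc; auto|apply Rmin_l]. }
    assert (E2 : Cmod (Cminus (g w') (g w)) < r/(2*A)).
    { apply H2; auto. intros i Hi. eapply Rlt_le_trans; [apply Hc; auto|apply Rmin_r]. }
    assert (T1 : Cmod (f w') * Cmod (Cminus (g w') (g w)) < r/2).
    { apply Rle_lt_trans with (A * Cmod (Cminus (g w') (g w))).
      - apply Rmult_le_compat_r; auto using Cmod_ge_0.
      - replace (r/2) with (A * (r/(2*A))) by (field; lra). apply Rmult_lt_compat_l; auto. }
    assert (T2 : Cmod (g w) * Cmod (Cminus (f w') (f w)) < r/2).
    { apply Rle_lt_trans with (B * Cmod (Cminus (f w') (f w))).
      - apply Rmult_le_compat_r; auto using Cmod_ge_0.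
      - replace (r/2) with (B * (r/(2*B))) by (field; lra). apply Rmult_lt_compat_l; auto. }
    lra.
  - exists (A * B). intros w Hw. rewrite Cmod_mult. apply Rmult_le_compat; auto using Cmod_ge_0.
Qed.

Lemma good_scal k c f : good k f -> good k (fun w => Cmult c (f w)).
Proof. intros H. apply (good_mult k (fun _ => c) f); auto. apply good_const. Qed.

Lemma good_minus k f g : good k f -> good k g -> good k (fun w => Cminus (f w) (g w)).
Proof.
  intros Hf Hg. eapply good_ext; [|apply (good_plus k f (fun w => Cmult (RtoC (-1)) (g w))); auto; apply good_scal; auto].
  intros; simpl. rewrite Cm1; ring.
Qed.

Lemma good_pow k f n : good k f -> good k (fun w => Cpow (f w) n).
Proof.
  intros Hf. induction n as [|n IH]; simpl.
  - apply good_const.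
  - apply (good_mult k f (fun w => Cpow (f w) n)); auto.
Qed.

Lemma good_csum k n : forall (F : (nat -> R) -> nat -> C), (forall i, (i < n)%nat -> good k (fun w => F w i)) ->
  good k (fun w => csum n (F w)).
Proof.
  induction n as [|n IH]; intros F HF; simpl.
  - apply good_const.
  - apply (good_plus k (fun w => csum n (F w)) (fun w => F w n)); auto.
Qed.

Lemma good_msum k m q : forall (G : (nat -> R) -> list nat -> C),
  (forall l, List.Forall (fun i => (i < m)%nat) l -> good k (fun w => G w l)) ->
  good k (fun w => msum q m (G w)).
Proof.
  induction q as [|q IH]; intros G HG; simpl.
  - apply HG. apply List.Forall_nil.
  - apply (good_csum k m (fun w i => msum q m (fun l => G w (i :: l)))).
    intros i Hi. apply (IH (fun w l => G w (i :: l))). intros l Hl. apply HG. apply List.Forall_cons; auto.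
Qed.

Lemma good_omprod k l : List.Forall (fun i => (i < k)%nat) l -> good k (fun w => RtoC (omprod w l)).
Proof.
  induction l as [|i l IH]; intros Hl; simpl.
  - apply good_const.
  - inversion Hl; subst.
    eapply good_ext; [|apply (good_mult k (fun w => RtoC (w i)) (fun w => RtoC (omprod w l))); auto; apply good_coord; auto].
    intros; simpl. rewrite RtoC_mult. auto.
Qed.

Lemma good_Iok k f : good k f -> Iok k f.
Proof. intros [H _]. apply UC_Iok; auto. Qed.

Lemma E_plus k f g : good k f -> good k g -> iterE k (fun w => Cplus (f w) (g w)) = Cplus (iterE k f) (iterE k g).
Proof. intros; apply iterE_plus; apply good_Iok; auto. Qed.

Lemma E_minus k f g : good k f -> good k g -> iterE k (fun w => Cminus (f w) (g w)) = Cminus (iterE k f) (iterE k g).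
Proof. intros; apply iterE_minus; apply good_Iok; auto. Qed.

Lemma E_scal k c f : good k f -> iterE k (fun w => Cmult c (f w)) = Cmult c (iterE k f).
Proof. intros; apply iterE_scal; apply good_Iok; auto. Qed.

Lemma E_bound k f M : good k f -> (forall w, in_box k w -> Cmod (f w) <= M) -> Cmod (iterE k f) <= M.
Proof. intros; apply iterE_bound; auto; apply good_Iok; auto. Qed.

Lemma E_csum k n : forall (F : (nat -> R) -> nat -> C), (forall i, (i < n)%nat -> good k (fun w => F w i)) ->
  iterE k (fun w => csum n (F w)) = csum n (fun i => iterE k (fun w => F w i)).
Proof.
  induction n as [|n IH]; intros F HF; simpl.
  - apply iterE_const.
  - rewrite (E_plus k (fun w => csum n (F w)) (fun w => F w n)).
    + rewrite IH; auto.
    + apply good_csum; auto.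
    + auto.
Qed.

Lemma C_eq_opp_0 (z : C) : z = Copp z -> z = RtoC 0.
Proof.
  intros H. assert (H2 : Cplus z z = RtoC 0). { rewrite H at 1. ring. }
  destruct z as [a b]. unfold Cplus, RtoC in H2; simpl in H2. injection H2; intros.
  unfold RtoC. f_equal; lra.
Qed.

Lemma E_antisym k s f : (forall i, s i = 1 \/ s i = -1) -> good k f ->
  (forall w, in_box k w -> f (fun i => s i * w i) = Copp (f w)) -> iterE k f = RtoC 0.
Proof.
  intros Hs Hf Ha. apply C_eq_opp_0.
  rewrite <- (iterE_sym k s f Hs (good_Iok k f Hf)) at 1.
  rewrite (iterE_ext k _ (fun w => Cmult (RtoC (-1)) (f w))).
  - rewrite E_scal; auto. rewrite Cm1. ring.
  - intros w Hw. rewrite Ha; auto. rewrite Cm1; ring.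
Qed.

Lemma E_onecoord k : forall i (g : R -> C), (i < k)%nat ->
  iterE k (fun w => g (w i)) = Cmult (RtoC (/2)) (RInt (V:=C_R_CompleteNormedModule) g (-1) 1).
Proof.
  induction k as [|j IH]; intros i g Hi; [lia|]. simpl.
  destruct (Nat.eq_dec i j) as [E|E].
  - subst. f_equal. apply RInt_ext. intros t _.
    rewrite (iterE_ext j _ (fun _ => g t)). { apply iterE_const. }
    intros w _. unfold upd. rewrite Nat.eqb_refl. auto.
  - assert (Hij : (i < j)%nat) by lia.
    rewrite (RInt_ext (V:=C_R_CompleteNormedModule) _ (fun _ => iterE j (fun w => g (w i)))).
    + rewrite RInt_const. rewrite C_half_two. apply IH; auto.
    + intros t _. apply iterE_ext. intros w _. unfold upd.
      destruct (Nat.eqb i j) eqn:E'; auto. apply Nat.eqb_eq in E'. lia.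
Qed.

Lemma RInt_sq : RInt (V:=C_R_CompleteNormedModule) (fun t => RtoC (t * t)) (-1) 1 = RtoC (2/3).
Proof.
  apply (is_RInt_unique (V:=C_R_CompleteNormedModule)).
  assert (H1 : is_RInt (V:=R_NormedModule) (fun t => t * t) (-1) 1 (2/3)).
  { replace (2/3) with (minus ((fun t => t*t*t/3) 1) ((fun t => t*t*t/3) (-1))).
    2:{ unfold minus, plus, opp; simpl. field. }
    apply (is_RInt_derive (V:=R_CompleteNormedModule) (fun t => t*t*t/3) (fun t => t*t)).
    - intros x _. auto_derive; auto. field.
    - intros x _. apply (ex_derive_continuous (V:=R_NormedModule)). auto_derive; auto. }
  assert (H2 : is_RInt (V:=R_NormedModule) (fun t => 0) (-1) 1 0).
  { assert (H := is_RInt_const (V:=R_NormedModule) (-1) 1 0).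
    replace (scal (1 - -1) (0:R_NormedModule)) with 0 in H. exact H. unfold scal; simpl; unfold mult; simpl; ring. }
  apply (is_RInt_fct_extend_pair (U:=R_NormedModule) (V:=R_NormedModule) (fun t => RtoC (t * t)) (-1) 1 (2/3) 0); simpl; auto.
Qed.

Lemma E_sq k i : (i < k)%nat -> iterE k (fun w => RtoC (w i * w i)) = RtoC (/3).
Proof.
  intros Hi. rewrite (E_onecoord k i (fun t => RtoC (t * t))); auto.
  rewrite RInt_sq. rewrite <- RtoC_mult. f_equal. field.
Qed.

Lemma E_cross k i j : (i < k)%nat -> (j < k)%nat -> i <> j -> iterE k (fun w => RtoC (w i * w j)) = RtoC 0.
Proof.
  intros Hi Hj Hij.
  apply (E_antisym k (fun l => if Nat.eqb l i then -1 else 1)).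
  - intros l. destruct (Nat.eqb l i); auto.
  - eapply good_ext; [|apply (good_mult k (fun w => RtoC (w i)) (fun w => RtoC (w j))); apply good_coord; auto].
    intros; simpl. rewrite RtoC_mult; auto.
  - intros w _. rewrite Nat.eqb_refl. destruct (Nat.eqb j i) eqn:E.
    + apply Nat.eqb_eq in E. lia.
    + rewrite <- RtoC_opp. f_equal. ring.
Qed.

Lemma Cmod_mult_le x y X Y : Cmod x <= X -> Cmod y <= Y -> Cmod (Cmult x y) <= X * Y.
Proof. intros. rewrite Cmod_mult. apply Rmult_le_compat; auto using Cmod_ge_0. Qed.

Lemma Cmod_plus_le x y X Y : Cmod x <= X -> Cmod y <= Y -> Cmod (Cplus x y) <= X + Y.
Proof. intros. eapply Rle_trans; [apply Cmod_triangle|]. lra. Qed.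

Lemma Cmod_pow_le x X n : Cmod x <= X -> Cmod (Cpow x n) <= X ^ n.
Proof. intros. rewrite Cmod_pow. apply pow_incr. split; auto using Cmod_ge_0. Qed.

Lemma Cmod_INR n : Cmod (RtoC (INR n)) = INR n.
Proof. rewrite Cmod_R. apply Rabs_right. apply Rle_ge, pos_INR. Qed.

Lemma RtoC_INR_S n : RtoC (INR (S n)) = Cplus (RtoC (INR n)) (RtoC 1).
Proof. rewrite S_INR. apply RtoC_plus. Qed.

Lemma pow_perturb n : forall x y : C,
  Cmod (Cminus (Cpow (Cplus x y) (S n)) (Cpow x (S n))) <= INR (S n) * (Cmod x + Cmod y) ^ n * Cmod y.
Proof.
  induction n as [|n IH]; intros x y.
  - simpl. replace (Cminus (Cmult (Cplus x y) (RtoC 1)) (Cmult x (RtoC 1))) with y by ring. lra.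
  - replace (Cminus (Cpow (Cplus x y) (S (S n))) (Cpow x (S (S n)))) with
      (Cplus (Cmult (Cplus x y) (Cminus (Cpow (Cplus x y) (S n)) (Cpow x (S n)))) (Cmult y (Cpow x (S n)))).
    2:{ simpl. ring. }
    set (Sm := Cmod x + Cmod y).
    assert (HS : Cmod (Cplus x y) <= Sm) by apply Cmod_triangle.
    assert (HS0 : 0 <= Sm) by (unfold Sm; pose proof (Cmod_ge_0 x); pose proof (Cmod_ge_0 y); lra).
    assert (Hx : Cmod x <= Sm) by (unfold Sm; pose proof (Cmod_ge_0 y); lra).
    eapply Rle_trans.
    { apply Cmod_plus_le. apply Cmod_mult_le; [exact HS|apply IH]. apply Cmod_mult_le; [apply Rle_refl|]. apply Cmod_pow_le; exact Hx. }
    fold Sm. rewrite (S_INR (S n)). simpl. 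
    assert (0 <= Cmod y) by apply Cmod_ge_0. assert (0 <= Sm ^ n) by (apply pow_le; auto).
    assert (0 <= INR (S n)) by apply pos_INR.
    replace (Sm ^ n + 0) with (Sm ^ n) by ring. nra.
Qed.

Fixpoint Qf (n : nat) (a b c : C) : C :=
  match n with
  | O => RtoC 0
  | S n' => Cplus (Cplus (Cmult a (Qf n' a b c)) (Cmult (Cmult (Cmult (RtoC (INR n')) (Cpow a (n' - 1))) b) b))
                  (Cmult c (Cpow a n'))
  end.

Definition zz (a b c : C) (e : R) := Cplus (Cplus a (Cmult (RtoC e) b)) (Cmult (Cmult (RtoC e) (RtoC e)) c).

Definition Rem (n : nat) a b c (e : R) :=
  Cminus (Cpow (zz a b c e) n)
    (Cplus (Cplus (Cpow a n) (Cmult (Cmult (Cmult (RtoC e) (RtoC (INR n))) (Cpow a (n - 1))) b))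
       (Cmult (Cmult (RtoC e) (RtoC e)) (Qf n a b c))).

Lemma Rem_step n a b c e :
  Rem (S n) a b c e = Cplus (Cplus (Cmult (zz a b c e) (Rem n a b c e))
     (Cmult (Cmult (Cmult (RtoC e) (RtoC e)) (RtoC e))
        (Cplus (Cmult b (Qf n a b c)) (Cmult (Cmult (Cmult (RtoC (INR n)) (Cpow a (n - 1))) b) c))))
     (Cmult (Cmult (Cmult (Cmult (RtoC e) (RtoC e)) (RtoC e)) (RtoC e)) (Cmult c (Qf n a b c))).
Proof.
  assert (H : Cmult (Cmult (RtoC (INR n)) (Cpow a (n - 1))) a = Cmult (RtoC (INR n)) (Cpow a n)).
  { destruct n as [|n']. simpl. ring. simpl. replace (n' - 0)%nat with n' by lia. ring. }
  match goal with |- ?L = ?R =>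
    assert (D : Cminus L R = Cmult (Cmult (RtoC e) b) (Cminus (Cmult (Cmult (RtoC (INR n)) (Cpow a (n - 1))) a) (Cmult (RtoC (INR n)) (Cpow a n))));
    [|transitivity (Cplus (Cminus L R) R); [ring|]; rewrite D, H; ring] end.
  unfold Rem. replace (S n - 1)%nat with n by lia. rewrite RtoC_INR_S.
  change (Qf (S n) a b c) with (Cplus (Cplus (Cmult a (Qf n a b c)) (Cmult (Cmult (Cmult (RtoC (INR n)) (Cpow a (n - 1))) b) b))
                  (Cmult c (Cpow a n))).
  change (Cpow (zz a b c e) (S n)) with (Cmult (zz a b c e) (Cpow (zz a b c e) n)).
  change (Cpow a (S n)) with (Cmult a (Cpow a n)).
  unfold zz. ring.
Qed.

Lemma expand2 n M : 0 <= M -> exists K, 0 <= K /\ forall a b c (e : R),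
  Cmod a <= M -> Cmod b <= M -> Cmod c <= M -> Rabs e <= 1 ->
  Cmod (Qf n a b c) <= K /\ Cmod (Rem n a b c e) <= K * Rabs e ^ 3.
Proof.
  intros HM. induction n as [|n IH].
  - exists 0. split; [lra|]. intros a b c e _ _ _ _. split.
    + simpl. rewrite Cmod_0; lra.
    + unfold Rem. simpl. replace (Cminus (RtoC 1) (Cplus (Cplus (RtoC 1) (Cmult (Cmult (Cmult (RtoC e) (RtoC 0)) (RtoC 1)) b))
        (Cmult (Cmult (RtoC e) (RtoC e)) (RtoC 0)))) with (RtoC 0) by ring. rewrite Cmod_0. lra.
  - destruct IH as [K [HK IH]].
    set (P := M ^ (n - 1)).
    assert (HP : 0 <= P) by (apply pow_le; auto).
    assert (Hn : 0 <= INR n) by apply pos_INR.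
    exists ((M * K + INR n * P * M * M + M * M ^ n) + (3 * M * K + M * K + INR n * P * M * M + M * K)).
    assert (0 <= M ^ n) by (apply pow_le; auto).
    split. { assert (0 <= M*K) by nra. assert (0 <= INR n * P * M * M) by (repeat apply Rmult_le_pos; auto). nra. }
    intros a b c e Ha Hb Hc He.
    destruct (IH a b c e Ha Hb Hc He) as [HQ HR].
    assert (Hp : Cmod (Cmult (Cmult (RtoC (INR n)) (Cpow a (n - 1))) b) <= INR n * P * M).
    { apply Cmod_mult_le; auto. apply Cmod_mult_le. rewrite Cmod_INR; lra. apply Cmod_pow_le; auto. }
    assert (HQ' : Cmod (Qf (S n) a b c) <= M * K + INR n * P * M * M + M * M ^ n).
    { simpl Qf. apply Cmod_plus_le. apply Cmod_plus_le. apply Cmod_mult_le; auto. apply Cmod_mult_le; auto.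
      apply Cmod_mult_le; auto. apply Cmod_pow_le; auto. }
    assert (He0 : 0 <= Rabs e) by apply Rabs_pos.
    assert (He3 : 0 <= Rabs e ^ 3) by (apply pow_le; auto).
    assert (Hz : Cmod (zz a b c e) <= 3 * M).
    { unfold zz. eapply Rle_trans. apply Cmod_plus_le. apply Cmod_plus_le. exact Ha.
      apply Cmod_mult_le. rewrite Cmod_R. exact He. exact Hb.
      apply Cmod_mult_le. apply Cmod_mult_le; rewrite Cmod_R; exact He. exact Hc. lra. }
    split.
    + assert (0 <= 3 * M * K + M * K + INR n * P * M * M + M * K).
      { assert (0 <= M*K) by nra. assert (0 <= INR n * P * M * M) by (repeat apply Rmult_le_pos; auto). nra. }
      lra.
    + rewrite Rem_step.
      assert (E3 : Cmod (Cmult (Cmult (RtoC e) (RtoC e)) (RtoC e)) = Rabs e ^ 3).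
      { rewrite !Cmod_mult, !Cmod_R. ring. }
      assert (E4 : Cmod (Cmult (Cmult (Cmult (RtoC e) (RtoC e)) (RtoC e)) (RtoC e)) <= Rabs e ^ 3).
      { rewrite Cmod_mult, E3, Cmod_R. replace (Rabs e ^ 3) with (Rabs e ^ 3 * 1) at 2 by ring.
        apply Rmult_le_compat_l; auto. }
      eapply Rle_trans. apply Cmod_plus_le. apply Cmod_plus_le.
      apply Cmod_mult_le. exact Hz. exact HR.
      apply Cmod_mult_le. rewrite E3; apply Rle_refl.
      apply Cmod_plus_le. apply Cmod_mult_le. exact Hb. exact HQ. apply Cmod_mult_le. exact Hp. exact Hc.
      apply Cmod_mult_le. exact E4. apply Cmod_mult_le. exact Hc. exact HQ.
      assert (0 <= M*K) by nra. assert (0 <= INR n * P * M * M) by (repeat apply Rmult_le_pos; auto).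
      assert (0 <= M * K + INR n * P * M * M + M * M ^ n) by nra.
      nra.
Qed.

Lemma RtoC_neg e : RtoC (- e) = Copp (RtoC e).
Proof. apply RtoC_opp. Qed.

Lemma odd_pt n M : 0 <= M -> exists K, 0 <= K /\ forall a b c e,
  Cmod a <= M -> Cmod b <= M -> Cmod c <= M -> Rabs e <= 1 ->
  Cmod (Cminus (Cminus (Cpow (zz a b c e) n) (Cpow (zz a b c (- e)) n))
     (Cmult (Cmult (Cmult (Cmult (RtoC 2) (RtoC e)) (RtoC (INR n))) (Cpow a (n - 1))) b)) <= K * Rabs e ^ 3.
Proof.
  intros HM. destruct (expand2 n M HM) as [K [HK H]]. exists (2 * K). split; [lra|].
  intros a b c e Ha Hb Hc He.
  destruct (H a b c e Ha Hb Hc He) as [_ H1].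
  destruct (H a b c (- e) Ha Hb Hc) as [_ H2]. { rewrite Rabs_Ropp; auto. }
  rewrite Rabs_Ropp in H2.
  replace (Cminus (Cminus (Cpow (zz a b c e) n) (Cpow (zz a b c (- e)) n))
     (Cmult (Cmult (Cmult (Cmult (RtoC 2) (RtoC e)) (RtoC (INR n))) (Cpow a (n - 1))) b))
   with (Cminus (Rem n a b c e) (Rem n a b c (- e))).
  2:{ unfold Rem. rewrite RtoC_neg. ring. }
  unfold Cminus. eapply Rle_trans. apply Cmod_triangle. rewrite Cmod_opp. lra.
Qed.

Lemma even_pt n M : 0 <= M -> exists K, 0 <= K /\ forall a b c e,
  Cmod a <= M -> Cmod b <= M -> Cmod c <= M -> Rabs e <= 1 ->
  Cmod (Cminus (Cplus (Cpow (zz a b c e) n) (Cpow (zz a b c (- e)) n))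
     (Cmult (RtoC 2) (Cpow a n))) <= K * Rabs e ^ 2.
Proof.
  intros HM. destruct (expand2 n M HM) as [K [HK H]]. exists (4 * K). split; [lra|].
  intros a b c e Ha Hb Hc He.
  destruct (H a b c e Ha Hb Hc He) as [HQ H1].
  destruct (H a b c (- e) Ha Hb Hc) as [_ H2]. { rewrite Rabs_Ropp; auto. }
  rewrite Rabs_Ropp in H2.
  replace (Cminus (Cplus (Cpow (zz a b c e) n) (Cpow (zz a b c (- e)) n)) (Cmult (RtoC 2) (Cpow a n)))
   with (Cplus (Cplus (Rem n a b c e) (Rem n a b c (- e))) (Cmult (Cmult (RtoC 2) (Cmult (RtoC e) (RtoC e))) (Qf n a b c))).
  2:{ unfold Rem. rewrite RtoC_neg. ring. }
  assert (He0 : 0 <= Rabs e) by apply Rabs_pos.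
  assert (E3 : Rabs e ^ 3 <= Rabs e ^ 2).
  { replace (Rabs e ^ 3) with (Rabs e ^ 2 * Rabs e) by ring.
    replace (Rabs e ^ 2) with (Rabs e ^ 2 * 1) at 2 by ring. apply Rmult_le_compat_l; auto. apply pow_le; auto. }
  eapply Rle_trans. apply Cmod_plus_le. apply Cmod_plus_le. exact H1. exact H2.
  apply Cmod_mult_le. apply Cmod_mult_le. rewrite Cmod_R, Rabs_right by lra. apply Rle_refl.
  rewrite Cmod_mult, Cmod_R. apply Rle_refl. exact HQ.
  replace (Rabs e * Rabs e) with (Rabs e ^ 2) by ring.
  assert (0 <= K * Rabs e ^ 2) by (apply Rmult_le_pos; auto; apply pow_le; auto).
  assert (K * Rabs e ^ 3 <= K * Rabs e ^ 2) by (apply Rmult_le_compat_l; auto).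
  nra.
Qed.

Lemma Cpow_opp_even k : forall x, Cpow (Copp x) (2 * k) = Cpow x (2 * k).
Proof.
  induction k as [|k IH]; intros x; [reflexivity|].
  replace (2 * S k)%nat with (S (S (2 * k))) by lia. rewrite !Cpow_S. rewrite IH. ring.
Qed.

Lemma Cpow_opp_odd n x : Nat.Odd n -> Cpow (Copp x) n = Copp (Cpow x n).
Proof.
  intros [k ->]. replace (2 * k + 1)%nat with (S (2 * k)) by lia. rewrite !Cpow_S. rewrite Cpow_opp_even. ring.
Qed.

Lemma Cpow_opp_ev n x : Nat.Even n -> Cpow (Copp x) n = Cpow x n.
Proof. intros [k ->]. apply Cpow_opp_even. Qed.

Definition negw (w : nat -> R) := fun i => -1 * w i.

Lemma good_zz k A B Cc e : good k A -> good k B -> good k Cc -> good k (fun w => zz (A w) (B w) (Cc w) e).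
Proof.
  intros HA HB HC. unfold zz.
  apply (good_plus k (fun w => Cplus (A w) (Cmult (RtoC e) (B w)))); auto.
  apply (good_plus k A); auto. apply good_scal; auto. apply good_scal; auto.
Qed.

Lemma bound_of k f : good k f -> exists M, 0 <= M /\ forall w, in_box k w -> Cmod (f w) <= M.
Proof.
  intros [_ [M HM]]. exists (Rabs M). split. apply Rabs_pos. intros w Hw. eapply Rle_trans; [apply HM; auto|apply Rle_abs].
Qed.

Section Core.
Variable k : nat.
Variables A B Cc : (nat -> R) -> C.
Hypothesis gA : good k A.
Hypothesis gB : good k B.
Hypothesis gC : good k Cc.
Hypothesis pA : forall w, in_box k w -> A (negw w) = Copp (A w).
Hypothesis pB : forall w, in_box k w -> B (negw w) = B w.
Hypothesis pC : forall w, in_box k w -> Cc (negw w) = Copp (Cc w).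

Definition Gf n e := iterE k (fun w => Cpow (zz (A w) (B w) (Cc w) e) n).

Lemma zz_neg w e : in_box k w -> zz (A (negw w)) (B (negw w)) (Cc (negw w)) e = Copp (zz (A w) (B w) (Cc w) (- e)).
Proof. intros Hw. rewrite pA, pB, pC by auto. unfold zz. rewrite RtoC_neg. ring. Qed.

Lemma Gf_sym n e : iterE k (fun w => Cpow (zz (A (negw w)) (B (negw w)) (Cc (negw w)) e) n) = Gf n e.
Proof.
  unfold Gf. apply (iterE_sym k (fun _ => -1) (fun w => Cpow (zz (A w) (B w) (Cc w) e) n)).
  - intros; right; auto.
  - apply good_Iok. apply good_pow. apply good_zz; auto.
Qed.

Lemma Gf_odd n e : Nat.Odd n -> Gf n e = Copp (Gf n (- e)).
Proof.
  intros Hn. rewrite <- Gf_sym. unfold Gf.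
  rewrite (iterE_ext k _ (fun w => Cmult (RtoC (-1)) (Cpow (zz (A w) (B w) (Cc w) (- e)) n))).
  - rewrite E_scal. rewrite Cm1; ring. apply good_pow, good_zz; auto.
  - intros w Hw. rewrite zz_neg by auto. rewrite Cpow_opp_odd by auto. rewrite Cm1; ring.
Qed.

Lemma Gf_even n e : Nat.Even n -> Gf n e = Gf n (- e).
Proof.
  intros Hn. rewrite <- Gf_sym. unfold Gf. apply iterE_ext.
  intros w Hw. rewrite zz_neg by auto. rewrite Cpow_opp_ev by auto. auto.
Qed.

Lemma G_odd_bound n : Nat.Odd n -> exists K, 0 <= K /\ forall e, Rabs e <= 1 ->
  Cmod (Cminus (Gf n e) (Cmult (Cmult (RtoC e) (RtoC (INR n)))
      (iterE k (fun w => Cmult (Cpow (A w) (n - 1)) (B w))))) <= K * Rabs e ^ 3.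
Proof.
  intros Hn.
  destruct (bound_of k A gA) as [M1 [H1 HM1]].
  destruct (bound_of k B gB) as [M2 [H2 HM2]].
  destruct (bound_of k Cc gC) as [M3 [H3 HM3]].
  destruct (odd_pt n (M1 + M2 + M3) ltac:(lra)) as [K [HK HP]].
  exists (K / 2). split; [lra|]. intros e He.
  assert (gP : forall e, good k (fun w => Cpow (zz (A w) (B w) (Cc w) e) n)).
  { intros; apply good_pow, good_zz; auto. }
  assert (gAB : good k (fun w => Cmult (Cpow (A w) (n - 1)) (B w))).
  { apply (good_mult k (fun w => Cpow (A w) (n - 1)) B); auto. apply good_pow; auto. }
  set (F := fun w => Cminus (Cminus (Cpow (zz (A w) (B w) (Cc w) e) n) (Cpow (zz (A w) (B w) (Cc w) (- e)) n))
     (Cmult (Cmult (Cmult (Cmult (RtoC 2) (RtoC e)) (RtoC (INR n))) (Cpow (A w) (n - 1))) (B w))).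
  assert (gF : good k F).
  { unfold F. apply (good_minus k (fun w => Cminus _ _) (fun w => Cmult (Cmult (Cmult (Cmult (RtoC 2) (RtoC e)) (RtoC (INR n))) (Cpow (A w) (n - 1))) (B w))).
    apply good_minus; auto.
    eapply good_ext; [|apply (good_scal k (Cmult (Cmult (RtoC 2) (RtoC e)) (RtoC (INR n))) _ gAB)].
    intros; simpl; ring. }
  assert (EF : iterE k F = Cmult (RtoC 2) (Cminus (Gf n e) (Cmult (Cmult (RtoC e) (RtoC (INR n)))
      (iterE k (fun w => Cmult (Cpow (A w) (n - 1)) (B w)))))).
  { unfold F. rewrite E_minus; auto.
    2:{ apply good_minus; auto. }
    2:{ eapply good_ext; [|apply (good_scal k (Cmult (Cmult (RtoC 2) (RtoC e)) (RtoC (INR n))) _ gAB)].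
        intros; simpl; ring. }
    rewrite E_minus; auto.
    rewrite (iterE_ext k (fun w => Cmult (Cmult (Cmult (Cmult (RtoC 2) (RtoC e)) (RtoC (INR n))) (Cpow (A w) (n - 1))) (B w))
       (fun w => Cmult (Cmult (Cmult (RtoC 2) (RtoC e)) (RtoC (INR n))) (Cmult (Cpow (A w) (n - 1)) (B w)))).
    2:{ intros; ring. }
    rewrite E_scal; auto. fold (Gf n e). fold (Gf n (- e)).
    rewrite (Gf_odd n e Hn). ring. }
  assert (BF : Cmod (iterE k F) <= K * Rabs e ^ 3).
  { apply E_bound; auto. intros w Hw. unfold F. apply HP; auto.
    - specialize (HM1 w Hw); lra.
    - specialize (HM2 w Hw); lra.
    - specialize (HM3 w Hw); lra. }
  rewrite EF, Cmod_mult, Cmod_R, Rabs_right in BF by lra.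
  lra.
Qed.

Lemma G_even_bound n : Nat.Even n -> exists K, 0 <= K /\ forall e, Rabs e <= 1 ->
  Cmod (Cminus (Gf n e) (iterE k (fun w => Cpow (A w) n))) <= K * Rabs e ^ 2.
Proof.
  intros Hn.
  destruct (bound_of k A gA) as [M1 [H1 HM1]].
  destruct (bound_of k B gB) as [M2 [H2 HM2]].
  destruct (bound_of k Cc gC) as [M3 [H3 HM3]].
  destruct (even_pt n (M1 + M2 + M3) ltac:(lra)) as [K [HK HP]].
  exists (K / 2). split; [lra|]. intros e He.
  assert (gP : forall e, good k (fun w => Cpow (zz (A w) (B w) (Cc w) e) n)).
  { intros; apply good_pow, good_zz; auto. }
  assert (gAn : good k (fun w => Cpow (A w) n)) by (apply good_pow; auto).
  set (F := fun w => Cminus (Cplus (Cpow (zz (A w) (B w) (Cc w) e) n) (Cpow (zz (A w) (B w) (Cc w) (- e)) n))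
     (Cmult (RtoC 2) (Cpow (A w) n))).
  assert (EF : iterE k F = Cmult (RtoC 2) (Cminus (Gf n e) (iterE k (fun w => Cpow (A w) n)))).
  { unfold F. rewrite E_minus; auto.
    2:{ apply good_plus; auto. }
    2:{ apply good_scal; auto. }
    rewrite E_plus; auto. rewrite E_scal; auto. fold (Gf n e). fold (Gf n (- e)).
    rewrite <- (Gf_even n e Hn). ring. }
  assert (BF : Cmod (iterE k F) <= K * Rabs e ^ 2).
  { apply E_bound; auto.
    - unfold F. apply good_minus. apply good_plus; auto. apply good_scal; auto.
    - intros w Hw. unfold F. apply HP; auto.
      + specialize (HM1 w Hw); lra.
      + specialize (HM2 w Hw); lra.
      + specialize (HM3 w Hw); lra. }
  rewrite EF, Cmod_mult, Cmod_R, Rabs_right in BF by lra.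
  lra.
Qed.

End Core.

Lemma pow_le1 (e : R) n : 0 <= e <= 1 -> e ^ n <= 1.
Proof.
  intros He. induction n as [|n IH]; simpl. lra.
  assert (0 <= e ^ n) by (apply pow_le; lra). nra.
Qed.

Lemma pow_small_le (e : R) a b : 0 <= e <= 1 -> (b <= a)%nat -> e ^ a <= e ^ b.
Proof.
  intros He Hab. replace a with (b + (a - b))%nat by lia. rewrite pow_add.
  replace (e ^ b) with (e ^ b * 1) at 2 by ring. apply Rmult_le_compat_l. apply pow_le; lra.
  apply pow_le1; lra.
Qed.

Lemma core_pert k n p A B Cc V (e Ky M : R) :
  good k A -> good k B -> good k Cc -> good k V -> 0 < e <= 1 -> 0 <= Ky -> 0 <= M ->
  (forall w, in_box k w -> Cmod (A w) <= M /\ Cmod (B w) <= M /\ Cmod (Cc w) <= M) ->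
  (forall w, in_box k w -> Cmod (Cminus (V w) (Cmult (RtoC e) (zz (A w) (B w) (Cc w) e))) <= Ky * e ^ (p + 1)) ->
  Cmod (Cminus (iterE k (fun w => Cpow (V w) n)) (Cmult (RtoC (e ^ n)) (Gf k A B Cc n e)))
    <= INR n * (3 * M + Ky) ^ (n - 1) * Ky * e ^ (n + p).
Proof.
  intros gA gB gC gV He HKy HM HAB HV.
  assert (gX : good k (fun w => Cmult (RtoC e) (zz (A w) (B w) (Cc w) e))) by (apply good_scal, good_zz; auto).
  assert (EX : Cmult (RtoC (e ^ n)) (Gf k A B Cc n e) = iterE k (fun w => Cpow (Cmult (RtoC e) (zz (A w) (B w) (Cc w) e)) n)).
  { unfold Gf. rewrite <- E_scal. apply iterE_ext. intros w _. rewrite Cpow_mult_l, RtoC_pow. auto.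
    apply good_pow, good_zz; auto. }
  rewrite EX. rewrite <- E_minus; try (apply good_pow; auto).
  apply E_bound. { apply good_minus; apply good_pow; auto. }
  intros w Hw.
  destruct n as [|n].
  - simpl. replace (Cminus (RtoC 1) (RtoC 1)) with (RtoC 0) by ring. rewrite Cmod_0. lra.
  - set (x := Cmult (RtoC e) (zz (A w) (B w) (Cc w) e)).
    replace (V w) with (Cplus x (Cminus (V w) x)) by ring.
    eapply Rle_trans; [apply pow_perturb|].
    destruct (HAB w Hw) as [H1 [H2 H3]].
    assert (Hx : Cmod x <= e * (3 * M)).
    { unfold x, zz. rewrite Cmod_mult, Cmod_R, Rabs_right by lra. apply Rmult_le_compat_l; [lra|].
      eapply Rle_trans. apply Cmod_plus_le. apply Cmod_plus_le. exact H1.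
      apply Cmod_mult_le. rewrite Cmod_R, Rabs_right by lra. apply Rle_refl. exact H2.
      apply Cmod_mult_le. apply Cmod_mult_le; rewrite Cmod_R, Rabs_right by lra; apply Rle_refl. exact H3.
      assert (e * M <= M) by nra. assert (e * e <= 1) by nra. assert (e * e * M <= M) by nra. lra. }
    assert (Hy := HV w Hw). fold x in Hy.
    assert (Hy' : Cmod (Cminus (V w) x) <= e * Ky).
    { eapply Rle_trans; [exact Hy|].
      assert (e ^ (p + 1) <= e). { replace e with (e ^ 1) at 2 by ring. apply pow_small_le; [lra|lia]. }
      nra. }
    assert (HS : Cmod x + Cmod (Cminus (V w) (Cplus x (Cminus (V w) x)) ) = Cmod x) by (replace (Cminus (V w) (Cplus x (Cminus (V w) x))) with (RtoC 0) by ring; rewrite Cmod_0; ring).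
    replace (Cminus (Cplus x (Cminus (V w) x)) x) with (Cminus (V w) x) by ring.
    replace (S n - 1)%nat with n by lia.
    assert (Hb : (Cmod x + Cmod (Cminus (V w) x)) ^ n <= (e * (3 * M + Ky)) ^ n).
    { apply pow_incr. split. pose proof (Cmod_ge_0 x); pose proof (Cmod_ge_0 (Cminus (V w) x)); lra. nra. }
    rewrite Rpow_mult_distr in Hb.
    replace (S n + p)%nat with (n + (p + 1))%nat by lia. rewrite pow_add.
    assert (0 <= INR (S n)) by apply pos_INR.
    assert (0 <= (3 * M + Ky) ^ n) by (apply pow_le; lra).
    assert (0 <= e ^ n) by (apply pow_le; lra).
    assert (0 <= Cmod (Cminus (V w) x)) by apply Cmod_ge_0.
    assert (0 <= (Cmod x + Cmod (Cminus (V w) x)) ^ n) by (apply pow_le; pose proof (Cmod_ge_0 x); lra).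
    apply Rle_trans with (INR (S n) * (e ^ n * (3 * M + Ky) ^ n) * (Ky * e ^ (p + 1))).
    + apply Rmult_le_compat; auto. apply Rmult_le_pos; auto. apply Rmult_le_compat_l; auto.
    + right; ring.
Qed.

Lemma csum_ext n f g : (forall i, (i < n)%nat -> f i = g i) -> csum n f = csum n g.
Proof.
  induction n as [|n IH]; intros H; simpl; auto. rewrite IH by (intros; apply H; lia). rewrite H by lia. auto.
Qed.

Lemma csum_scal n c f : csum n (fun i => Cmult c (f i)) = Cmult c (csum n f).
Proof. induction n as [|n IH]; simpl. ring. rewrite IH. ring. Qed.

Lemma csum_mult_r n f c : csum n (fun i => Cmult (f i) c) = Cmult (csum n f) c.
Proof. induction n as [|n IH]; simpl. ring. rewrite IH. ring. Qed.

Lemma csum_mult n f g : Cmult (csum n f) (csum n g) = csum n (fun i => csum n (fun j => Cmult (f i) (g j))).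
Proof.
  rewrite <- csum_mult_r. apply csum_ext. intros i _. rewrite <- csum_scal. auto.
Qed.

Lemma csum_zero n f : (forall i, (i < n)%nat -> f i = RtoC 0) -> csum n f = RtoC 0.
Proof. induction n as [|n IH]; intros H; simpl; auto. rewrite IH by (intros; apply H; lia). rewrite H by lia. ring. Qed.

Lemma csum_delta n i (x : nat -> C) : (i < n)%nat -> csum n (fun j => if Nat.eqb i j then x j else RtoC 0) = x i.
Proof.
  induction n as [|n IH]; intros Hi; [lia|]. simpl.
  destruct (Nat.eq_dec i n) as [->|Hne].
  - rewrite Nat.eqb_refl. rewrite csum_zero. ring. intros j Hj. destruct (Nat.eqb n j) eqn:E; auto.
    apply Nat.eqb_eq in E; lia.
  - rewrite IH by lia. destruct (Nat.eqb i n) eqn:E. apply Nat.eqb_eq in E; lia. ring.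
Qed.

Lemma omprod_neg w l : omprod (negw w) l = (-1) ^ (length l) * omprod w l.
Proof. induction l as [|i l IH]; simpl. ring. rewrite IH. unfold negw. ring. Qed.

Lemma msum_len m q : forall (g g' : list nat -> C) c, (forall l, length l = q -> g' l = Cmult c (g l)) ->
  msum q m g' = Cmult c (msum q m g).
Proof.
  induction q as [|q IH]; intros g g' c H; simpl.
  - apply H; auto.
  - rewrite <- csum_scal. apply csum_ext. intros i _. apply IH. intros l Hl. apply H. simpl; auto.
Qed.

Definition Tq m (D : list nat -> C) q (w : nat -> R) := msum q m (fun l => Cmult (RtoC (omprod w l)) (D l)).

Lemma good_Tq m D q : good m (Tq m D q).
Proof.
  unfold Tq. apply (good_msum m m q (fun w l => Cmult (RtoC (omprod w l)) (D l))).
  intros l Hl. apply (good_mult m (fun w => RtoC (omprod w l)) (fun _ => D l)).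
  apply good_omprod; auto. apply good_const.
Qed.

Lemma Tq_neg m D q w : Tq m D q (negw w) = Cmult (RtoC ((-1) ^ q)) (Tq m D q w).
Proof.
  unfold Tq. apply msum_len. intros l Hl. rewrite omprod_neg, Hl, RtoC_mult. ring.
Qed.

Lemma good_tt m D N eps : good m (fun w => taylor_terms N m D eps w).
Proof.
  induction N as [|N IH]; simpl.
  - apply good_const.
  - apply (good_plus m (fun w => taylor_terms N m D eps w)); auto.
    apply good_scal. apply (good_Tq m D (S N)).
Qed.

Lemma tt_tail m D p d : exists K, 0 <= K /\ forall eps w, 0 < eps <= 1 -> in_box m w ->
  Cmod (Cminus (taylor_terms (p + d) m D eps w) (taylor_terms p m D eps w)) <= K * eps ^ (p + 1).
Proof.
  induction d as [|d IH].
  - exists 0. split; [lra|]. intros eps w _ _. replace (p + 0)%nat with p by lia.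
    replace (Cminus (taylor_terms p m D eps w) (taylor_terms p m D eps w)) with (RtoC 0) by ring.
    rewrite Cmod_0. lra.
  - destruct IH as [K [HK H]].
    destruct (bound_of m _ (good_Tq m D (S (p + d)))) as [MT [HMT HT]].
    exists (K + MT). split; [lra|]. intros eps w He Hw.
    replace (p + S d)%nat with (S (p + d)) by lia.
    change (taylor_terms (S (p + d)) m D eps w) with (Cplus (taylor_terms (p + d) m D eps w)
        (Cmult (RtoC (eps ^ S (p + d) / INR (fact (S (p + d))))) (msum (S (p + d)) m (fun l => Cmult (RtoC (omprod w l)) (D l))))).
    replace (Cminus (Cplus (taylor_terms (p + d) m D eps w)
        (Cmult (RtoC (eps ^ S (p + d) / INR (fact (S (p + d))))) (msum (S (p + d)) m (fun l => Cmult (RtoC (omprod w l)) (D l)))))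
        (taylor_terms p m D eps w))
      with (Cplus (Cminus (taylor_terms (p + d) m D eps w) (taylor_terms p m D eps w))
        (Cmult (RtoC (eps ^ S (p + d) / INR (fact (S (p + d))))) (Tq m D (S (p + d)) w))) by (unfold Tq; ring).
    eapply Rle_trans. apply Cmod_plus_le. apply H; auto.
    apply Cmod_mult_le. apply Rle_refl. apply HT; auto.
    assert (Hf : 1 <= INR (fact (S (p + d)))).
    { replace 1 with (INR 1) by reflexivity. apply le_INR. pose proof (lt_O_fact (S (p + d))). lia. }
    assert (Hpow : eps ^ S (p + d) <= eps ^ (p + 1)) by (apply pow_small_le; [lra|lia]).
    assert (Hp0 : 0 <= eps ^ S (p + d)) by (apply pow_le; lra).
    assert (Hc : Cmod (RtoC (eps ^ S (p + d) / INR (fact (S (p + d))))) <= eps ^ (p + 1)).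
    { rewrite Cmod_R. rewrite Rabs_right.
      - apply Rle_trans with (eps ^ S (p + d)); auto. unfold Rdiv.
        replace (eps ^ S (p + d)) with (eps ^ S (p + d) * 1) at 2 by ring.
        apply Rmult_le_compat_l; auto. rewrite <- Rinv_1. apply Rinv_le_contravar; lra.
      - apply Rle_ge. apply Rdiv_le_0_compat; lra. }
    assert (0 <= Cmod (RtoC (eps ^ S (p + d) / INR (fact (S (p + d)))))) by apply Cmod_ge_0.
    assert (0 <= eps ^ (p + 1)) by (apply pow_le; lra).
    assert (Cmod (RtoC (eps ^ S (p + d) / INR (fact (S (p + d))))) * MT <= eps ^ (p + 1) * MT) by (apply Rmult_le_compat_r; auto).
    nra.
Qed.

Lemma E_ww m i j : (i < m)%nat -> (j < m)%nat ->
  iterE m (fun w => RtoC (w i * w j)) = if Nat.eqb i j then RtoC (/3) else RtoC 0.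
Proof.
  intros Hi Hj. destruct (Nat.eqb i j) eqn:E.
  - apply Nat.eqb_eq in E; subst. apply E_sq; auto.
  - apply Nat.eqb_neq in E. apply E_cross; auto.
Qed.

Lemma good_ww m i j : (i < m)%nat -> (j < m)%nat -> good m (fun w => RtoC (w i * w j)).
Proof.
  intros Hi Hj. eapply good_ext; [|apply (good_mult m (fun w => RtoC (w i)) (fun w => RtoC (w j))); apply good_coord; auto].
  intros; simpl. rewrite RtoC_mult; auto.
Qed.

Lemma E_quad m (Dq : nat -> nat -> C) :
  iterE m (fun w => csum m (fun i => csum m (fun j => Cmult (RtoC (w i * w j)) (Dq i j))))
  = csum m (fun i => Cmult (RtoC (/3)) (Dq i i)).
Proof.
  assert (gt : forall i j, (i < m)%nat -> (j < m)%nat -> good m (fun w => Cmult (RtoC (w i * w j)) (Dq i j))).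
  { intros i j Hi Hj. apply (good_mult m (fun w => RtoC (w i * w j)) (fun _ => Dq i j)). apply good_ww; auto. apply good_const. }
  rewrite (E_csum m m (fun w i => csum m (fun j => Cmult (RtoC (w i * w j)) (Dq i j)))).
  2:{ intros i Hi. apply (good_csum m m (fun w j => Cmult (RtoC (w i * w j)) (Dq i j))). intros; apply gt; auto. }
  apply csum_ext. intros i Hi.
  rewrite (E_csum m m (fun w j => Cmult (RtoC (w i * w j)) (Dq i j))).
  2:{ intros; apply gt; auto. }
  rewrite (csum_ext m _ (fun j => if Nat.eqb i j then Cmult (RtoC (/3)) (Dq i j) else RtoC 0)).
  - apply (csum_delta m i (fun j => Cmult (RtoC (/3)) (Dq i j))); auto.
  - intros j Hj. rewrite (iterE_ext m _ (fun w => Cmult (Dq i j) (RtoC (w i * w j)))).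
    2:{ intros; ring. }
    rewrite E_scal by (apply good_ww; auto). rewrite E_ww by auto.
    destruct (Nat.eqb i j); ring.
Qed.

Lemma T1_odd m D : forall w, in_box m w -> Tq m D 1 (negw w) = Copp (Tq m D 1 w).
Proof. intros w _. rewrite Tq_neg. replace ((-1) ^ 1) with (-1) by ring. rewrite Cm1. ring. Qed.

Lemma T1_E0 m D : iterE m (Tq m D 1) = RtoC 0.
Proof.
  apply (E_antisym m (fun _ => -1)). intros; auto. apply good_Tq.
  intros w Hw. apply (T1_odd m D w Hw).
Qed.

Definition Bf m D := fun w => Cmult (RtoC (/2)) (Tq m D 2 w).

Lemma Bf_even m D : forall w, in_box m w -> Bf m D (negw w) = Bf m D w.
Proof. intros w _. unfold Bf. rewrite Tq_neg. replace ((-1) ^ 2) with 1 by ring. ring. Qed.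

Lemma good_Bf m D : good m (Bf m D).
Proof. apply good_scal, good_Tq. Qed.

Lemma asym (m N : nat) (U : R -> (nat -> R) -> C) u0 D Kt et ec p (Cc : (nat -> R) -> C) :
  0 < et -> 0 < ec ->
  (forall eps w, 0 < eps < et -> in_box m w ->
       Cmod (Cminus (U eps w) (Cplus u0 (taylor_terms N m D eps w))) <= Kt * eps ^ (S N)) ->
  (forall eps, 0 < eps < ec -> UCk m (U eps)) ->
  (p <= N)%nat -> good m Cc -> (forall w, in_box m w -> Cc (negw w) = Copp (Cc w)) ->
  (forall eps w, taylor_terms p m D eps w =
      Cplus (Cplus (Cmult (RtoC eps) (Tq m D 1 w)) (Cmult (Cmult (RtoC eps) (RtoC eps)) (Bf m D w)))
        (Cmult (Cmult (Cmult (RtoC eps) (RtoC eps)) (RtoC eps)) (Cc w))) ->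
  exists Ky e1, 0 <= Ky /\ 0 < e1 /\ forall eps, 0 < eps < e1 -> eps <= 1 /\
    good m (fun w => Cminus (U eps w) (iterE m (U eps))) /\
    forall w, in_box m w ->
      Cmod (Cminus (Cminus (U eps w) (iterE m (U eps)))
        (Cmult (RtoC eps) (zz (Tq m D 1 w) (Cminus (Bf m D w) (iterE m (Bf m D))) (Cc w) eps))) <= Ky * eps ^ (p + 1).
Proof.
  intros Het Hec Ht HUC HpN gC pC Htt.
  destruct (tt_tail m D p (N - p)) as [K1 [HK1 HT1]].
  replace (p + (N - p))%nat with N in HT1 by lia.
  set (KR := Rabs Kt + K1).
  assert (HKR : 0 <= KR) by (unfold KR; pose proof (Rabs_pos Kt); lra).
  exists (2 * KR), (Rmin 1 (Rmin et ec)). split; [lra|]. split.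
  { apply Rmin_pos; [lra|apply Rmin_pos; auto]. }
  intros eps He.
  assert (He1 : eps <= 1) by (pose proof (Rmin_l 1 (Rmin et ec)); lra).
  assert (Het' : eps < et) by (pose proof (Rmin_r 1 (Rmin et ec)); pose proof (Rmin_l et ec); lra).
  assert (Hec' : eps < ec) by (pose proof (Rmin_r 1 (Rmin et ec)); pose proof (Rmin_r et ec); lra).
  split; auto.
  set (P := fun w => Cplus u0 (taylor_terms p m D eps w)).
  set (Rf := fun w => Cminus (U eps w) (P w)).
  assert (gP : good m P) by (apply (good_plus m (fun _ => u0)); [apply good_const|apply good_tt]).
  assert (HR : forall w, in_box m w -> Cmod (Rf w) <= KR * eps ^ (p + 1)).
  { intros w Hw. unfold Rf, P.
    replace (Cminus (U eps w) (Cplus u0 (taylor_terms p m D eps w))) with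
      (Cplus (Cminus (U eps w) (Cplus u0 (taylor_terms N m D eps w)))
             (Cminus (taylor_terms N m D eps w) (taylor_terms p m D eps w))) by ring.
    eapply Rle_trans. apply Cmod_plus_le. apply Ht; auto. split; lra. apply HT1; auto. split; lra.
    assert (eps ^ S N <= eps ^ (p + 1)) by (apply pow_small_le; [lra|lia]).
    assert (0 <= eps ^ S N) by (apply pow_le; lra).
    assert (Kt * eps ^ S N <= Rabs Kt * eps ^ (p + 1)).
    { apply Rle_trans with (Rabs Kt * eps ^ S N). apply Rmult_le_compat_r; auto. apply Rle_abs.
      apply Rmult_le_compat_l; auto. apply Rabs_pos. }
    unfold KR. lra. }
  assert (gU : good m (U eps)).
  { split. apply HUC; lra.
    destruct (bound_of m P gP) as [MP [HMP0 HMP]].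
    exists (MP + KR * eps ^ (p + 1)). intros w Hw.
    replace (U eps w) with (Cplus (P w) (Rf w)) by (unfold Rf; ring).
    apply Cmod_plus_le; auto. }
  assert (gR : good m Rf) by (apply good_minus; auto).
  assert (EU : iterE m (U eps) = Cplus (Cplus u0 (Cmult (Cmult (RtoC eps) (RtoC eps)) (iterE m (Bf m D)))) (iterE m Rf)).
  { rewrite (iterE_ext m (U eps) (fun w => Cplus (P w) (Rf w))) by (intros; unfold Rf; ring).
    rewrite E_plus; auto. f_equal.
    unfold P. rewrite E_plus; [|apply good_const|apply good_tt]. rewrite iterE_const. f_equal.
    rewrite (iterE_ext m _ _ (fun w _ => Htt eps w)).
    assert (gT1 := good_Tq m D 1). assert (gB := good_Bf m D).
    rewrite E_plus; [|apply good_plus; apply good_scal; auto|apply good_scal; auto].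
    rewrite E_plus; [|apply good_scal; auto|apply good_scal; auto].
    rewrite !E_scal; auto.
    rewrite T1_E0. rewrite (E_antisym m (fun _ => -1) Cc); auto. ring. }
  split.
  - apply good_minus; auto. apply good_const.
  - intros w Hw.
    replace (Cminus (Cminus (U eps w) (iterE m (U eps)))
        (Cmult (RtoC eps) (zz (Tq m D 1 w) (Cminus (Bf m D w) (iterE m (Bf m D))) (Cc w) eps)))
      with (Cminus (Rf w) (iterE m Rf)).
    2:{ rewrite EU. unfold Rf, P. rewrite Htt. unfold zz. ring. }
    unfold Cminus. eapply Rle_trans. apply Cmod_triangle. rewrite Cmod_opp.
    assert (Cmod (iterE m Rf) <= KR * eps ^ (p + 1)) by (apply E_bound; auto).
    specialize (HR w Hw). lra.
Qed.

Lemma part_gen (m N : nat) (U : R -> (nat -> R) -> C) u0 D Kt et ec p (Cc : (nat -> R) -> C) n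
  (Tgt : R -> C) (Kg : R) :
  0 < et -> 0 < ec ->
  (forall eps w, 0 < eps < et -> in_box m w ->
       Cmod (Cminus (U eps w) (Cplus u0 (taylor_terms N m D eps w))) <= Kt * eps ^ (S N)) ->
  (forall eps, 0 < eps < ec -> UCk m (U eps)) ->
  (p <= N)%nat -> good m Cc -> (forall w, in_box m w -> Cc (negw w) = Copp (Cc w)) ->
  (forall eps w, taylor_terms p m D eps w =
      Cplus (Cplus (Cmult (RtoC eps) (Tq m D 1 w)) (Cmult (Cmult (RtoC eps) (RtoC eps)) (Bf m D w)))
        (Cmult (Cmult (Cmult (RtoC eps) (RtoC eps)) (RtoC eps)) (Cc w))) ->
  0 <= Kg ->
  (forall e, 0 < e <= 1 -> Cmod (Cminus (Gf m (Tq m D 1) (fun w => Cminus (Bf m D w) (iterE m (Bf m D))) Cc n e)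
        (Tgt e)) <= Kg * e ^ p) ->
  bigO_eps (fun eps => Mcentral m n (U eps)) (fun eps => Cmult (RtoC (eps ^ n)) (Tgt eps)) (n + p).
Proof.
  intros Het Hec Ht HUC HpN gC pC Htt HKg HG.
  destruct (asym m N U u0 D Kt et ec p Cc Het Hec Ht HUC HpN gC pC Htt) as [Ky [e1 [HKy [He1 H]]]].
  set (B' := fun w => Cminus (Bf m D w) (iterE m (Bf m D))).
  assert (gT1 := good_Tq m D 1).
  assert (gB' : good m B') by (apply good_minus; [apply good_Bf|apply good_const]).
  destruct (bound_of m _ gT1) as [M1 [HM1 B1]].
  destruct (bound_of m _ gB') as [M2 [HM2 B2]].
  destruct (bound_of m _ gC) as [M3 [HM3 B3]].
  set (M := M1 + M2 + M3).
  exists (INR n * (3 * M + Ky) ^ (n - 1) * Ky + Kg), e1. split; auto.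
  intros eps He.
  destruct (H eps He) as [Hle1 [gV HV]].
  assert (CP := core_pert m n p (Tq m D 1) B' Cc (fun w => Cminus (U eps w) (iterE m (U eps))) eps Ky M
     gT1 gB' gC gV ltac:(lra) HKy ltac:(unfold M; lra)
     ltac:(intros w Hw; specialize (B1 w Hw); specialize (B2 w Hw); specialize (B3 w Hw); unfold M; repeat split; lra)
     HV).
  specialize (HG eps ltac:(lra)).
  unfold Mcentral, Expect.
  set (EV := iterE m (fun w => Cpow (Cminus (U eps w) (iterE m (U eps))) n)) in *.
  set (G := Gf m (Tq m D 1) B' Cc n eps) in *.
  replace (Cminus EV (Cmult (RtoC (eps ^ n)) (Tgt eps))) with
    (Cplus (Cminus EV (Cmult (RtoC (eps ^ n)) G)) (Cmult (RtoC (eps ^ n)) (Cminus G (Tgt eps)))) by ring.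
  eapply Rle_trans. apply Cmod_plus_le. exact CP. rewrite Cmod_mult, Cmod_R, Rabs_right. apply Rle_refl.
  apply Rle_ge, pow_le; lra.
  assert (0 <= eps ^ n) by (apply pow_le; lra).
  assert (eps ^ n * Cmod (Cminus G (Tgt eps)) <= eps ^ n * (Kg * eps ^ p)) by (apply Rmult_le_compat_l; auto).
  rewrite !pow_add.
  nra.
Qed.

Lemma T1_eq m D w : Tq m D 1 w = csum m (fun i => Cmult (RtoC (w i)) (D (i :: nil))).
Proof. unfold Tq. simpl. apply csum_ext. intros i _. rewrite Rmult_1_r. auto. Qed.

Lemma T2_eq m D w : Tq m D 2 w = csum m (fun i => csum m (fun j => Cmult (RtoC (w i * w j)) (D (i :: j :: nil)))).
Proof. unfold Tq. simpl. apply csum_ext. intros i _. apply csum_ext. intros j _. rewrite Rmult_1_r. auto. Qed.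

Lemma INR_fact2 : INR (fact 2) = 2.
Proof. simpl. ring. Qed.
Lemma INR_fact3 : INR (fact 3) = 6.
Proof. simpl. ring. Qed.

Lemma tt2 m D eps w : taylor_terms 2 m D eps w =
      Cplus (Cplus (Cmult (RtoC eps) (Tq m D 1 w)) (Cmult (Cmult (RtoC eps) (RtoC eps)) (Bf m D w)))
        (Cmult (Cmult (Cmult (RtoC eps) (RtoC eps)) (RtoC eps)) ((fun _ => RtoC 0) w)).
Proof.
  change (taylor_terms 2 m D eps w) with
    (Cplus (Cplus (RtoC 0) (Cmult (RtoC (eps ^ 1 / INR (fact 1))) (Tq m D 1 w)))
       (Cmult (RtoC (eps ^ 2 / INR (fact 2))) (Tq m D 2 w))).
  rewrite INR_fact2. replace (INR (fact 1)) with 1 by (simpl; ring).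
  unfold Bf. replace (eps ^ 1 / 1) with eps by field. replace (eps ^ 2 / 2) with (eps * eps * /2) by field.
  rewrite !RtoC_mult. ring.
Qed.

Definition Cf m D := fun w => Cmult (RtoC (/6)) (Tq m D 3 w).

Lemma good_Cf m D : good m (Cf m D).
Proof. apply good_scal, good_Tq. Qed.

Lemma Cf_odd m D : forall w, in_box m w -> Cf m D (negw w) = Copp (Cf m D w).
Proof. intros w _. unfold Cf. rewrite Tq_neg. replace ((-1) ^ 3) with (-1) by ring. rewrite Cm1. ring. Qed.

Lemma tt3 m D eps w : taylor_terms 3 m D eps w =
      Cplus (Cplus (Cmult (RtoC eps) (Tq m D 1 w)) (Cmult (Cmult (RtoC eps) (RtoC eps)) (Bf m D w)))
        (Cmult (Cmult (Cmult (RtoC eps) (RtoC eps)) (RtoC eps)) (Cf m D w)).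
Proof.
  change (taylor_terms 3 m D eps w) with
    (Cplus (Cplus (Cplus (RtoC 0) (Cmult (RtoC (eps ^ 1 / INR (fact 1))) (Tq m D 1 w)))
       (Cmult (RtoC (eps ^ 2 / INR (fact 2))) (Tq m D 2 w)))
       (Cmult (RtoC (eps ^ 3 / INR (fact 3))) (Tq m D 3 w))).
  rewrite INR_fact2, INR_fact3. replace (INR (fact 1)) with 1 by (simpl; ring).
  unfold Bf, Cf. replace (eps ^ 1 / 1) with eps by field. replace (eps ^ 2 / 2) with (eps * eps * /2) by field.
  replace (eps ^ 3 / 6) with (eps * eps * eps * /6) by field.
  rewrite !RtoC_mult. ring.
Qed.

Lemma E_Bf m D : iterE m (Bf m D) = Cmult (RtoC (/ INR (fact 3))) (csum m (fun i => D (i :: i :: nil))).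
Proof.
  unfold Bf. rewrite E_scal by apply good_Tq.
  rewrite (iterE_ext m _ _ (fun w _ => T2_eq m D w)).
  rewrite (E_quad m (fun i j => D (i :: j :: nil))). rewrite csum_scal. rewrite INR_fact3.
  rewrite Cmult_assoc. rewrite <- RtoC_mult. replace (/2 * /3) with (/6) by field. reflexivity.
Qed.

Lemma E_T1sq m D : iterE m (fun w => Cpow (Tq m D 1 w) 2) = Cmult (RtoC (/3)) (csum m (fun i => Cpow (D (i :: nil)) 2)).
Proof.
  rewrite (iterE_ext m _ (fun w => csum m (fun i => csum m (fun j => Cmult (RtoC (w i * w j)) (Cmult (D (i :: nil)) (D (j :: nil))))))).
  - rewrite E_quad. rewrite <- csum_scal. apply csum_ext. intros i _. simpl. ring.
  - intros w _. rewrite T1_eq. change (Cpow ?x 2) with (Cmult x (Cmult x (RtoC 1))).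
    rewrite Cmult_1_r. rewrite csum_mult. apply csum_ext. intros i _. apply csum_ext. intros j _.
    rewrite RtoC_mult. ring.
Qed.

Lemma binom_n1 n : (0 < n)%nat -> Binomial.C n 1 = INR n.
Proof.
  intros Hn. destruct n as [|k]; [lia|]. unfold Binomial.C.
  replace (S k - 1)%nat with k by lia. simpl fact at 2.
  change (fact (S k)) with (S k * fact k)%nat. rewrite mult_INR.
  replace (INR (1 * 1)) with 1 by (simpl; ring).
  replace (INR 1) with 1 by reflexivity. field. apply INR_fact_neq_0.
Qed.

Lemma bigO_ext f g g' k : (forall e, g e = g' e) -> bigO_eps f g k -> bigO_eps f g' k.
Proof.
  intros H [K [e0 [He0 HB]]]. exists K, e0. split; auto. intros eps He. rewrite <- H. auto.
Qed.

Theorem theorem4p2 (m N : nat) (U : R -> (nat -> R) -> C) (u0 : C)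
  (D : list nat -> C)
  (* multivariate shape Taylor expansion of order N, uniform in w *)
  (Htaylor : exists K e0, 0 < e0 /\
     forall eps w, 0 < eps < e0 -> in_box m w ->
       Cmod (Cminus (U eps w) (Cplus u0 (taylor_terms N m D eps w)))
         <= K * eps ^ (S N))
  (* regularity: for small eps, w |-> U eps w is continuous on [-1,1]^m *)
  (Hcont : exists e0, 0 < e0 /\
     forall eps, 0 < eps < e0 ->
     forall w, in_box m w -> forall r, 0 < r -> exists d, 0 < d /\
       forall w', in_box m w' -> (forall i, (i < m)%nat -> Rabs (w' i - w i) < d) ->
         Cmod (Cminus (U eps w') (U eps w)) < r) :
  (* (i) *)
  (exists e0, 0 < e0 /\ forall eps, 0 < eps < e0 ->
      Mcentral m 1 (U eps) = RtoC 0) /\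
  (* (ii) *)
  ((2 <= N)%nat ->
     bigO_eps (fun eps => Mcentral m 2 (U eps))
       (fun eps => Cmult (RtoC (eps ^ 2 / 3))
          (csum m (fun i => Cpow (D (i :: nil)) 2))) 4) /\
  (* (iii) *)
  ((2 <= N)%nat -> forall n : nat, (0 < n)%nat -> Nat.Even n ->
     bigO_eps (fun eps => Mcentral m n (U eps))
       (fun eps => Cmult (RtoC (eps ^ n))
          (Expect m (fun w =>
             Cpow (csum m (fun i => Cmult (RtoC (w i)) (D (i :: nil)))) n)))
       (n + 2)) /\
  (* (iv) *)
  ((3 <= N)%nat -> forall n : nat, Nat.Odd n ->
     bigO_eps (fun eps => Mcentral m n (U eps))
       (fun eps => Cmult (RtoC (eps ^ (n + 1) * Binomial.C n 1))
          (Expect m (fun w =>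
             Cmult
               (Cpow (csum m (fun i => Cmult (RtoC (w i)) (D (i :: nil)))) (n - 1))
               (Cminus
                  (Cmult (RtoC (/ INR (fact 2)))
                     (csum m (fun i => csum m (fun j =>
                        Cmult (RtoC (w i * w j)) (D (i :: j :: nil))))))
                  (Cmult (RtoC (/ INR (fact 3)))
                     (csum m (fun i => D (i :: i :: nil))))))))
       (n + 3)).
Proof.
  destruct Htaylor as [Kt [et [Het Ht]]].
  destruct Hcont as [ec [Hec Hc]].
  assert (HUC : forall eps, 0 < eps < ec -> UCk m (U eps)).
  { intros eps He. apply heine_cantor. apply Hc; auto. }
  assert (gA := good_Tq m D 1).
  set (B' := fun w => Cminus (Bf m D w) (iterE m (Bf m D))).
  assert (gB' : good m B') by (apply good_minus; [apply good_Bf|apply good_const]).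
  assert (pB' : forall w, in_box m w -> B' (negw w) = B' w).
  { intros w Hw. unfold B'. rewrite Bf_even; auto. }
  assert (P3 : (2 <= N)%nat -> forall n, Nat.Even n -> bigO_eps (fun eps => Mcentral m n (U eps))
        (fun eps => Cmult (RtoC (eps ^ n)) (iterE m (fun w => Cpow (Tq m D 1 w) n))) (n + 2)).
  { intros HN n Hn.
    assert (g0 : good m (fun _ : nat -> R => RtoC 0)) by apply good_const.
    assert (p0 : forall w, in_box m w -> (fun _ : nat -> R => RtoC 0) (negw w) = Copp ((fun _ : nat -> R => RtoC 0) w)).
    { intros; simpl. ring. }
    destruct (G_even_bound m (Tq m D 1) B' (fun _ => RtoC 0) gA gB' g0 (T1_odd m D) pB' p0 n Hn) as [Kg [HKg HG]].
    apply (part_gen m N U u0 D Kt et ec 2 (fun _ => RtoC 0) n (fun _ => iterE m (fun w => Cpow (Tq m D 1 w) n)) Kg); auto.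
    - intros; apply tt2.
    - intros e He. specialize (HG e). rewrite Rabs_right in HG by lra. apply HG; lra. }
  split; [|split; [|split]].
  - exists ec. split; auto. intros eps He. unfold Mcentral, Expect.
    set (c := iterE m (U eps)).
    rewrite (iterE_ext m _ (fun w => Cminus (U eps w) ((fun _ => c) w))).
    2:{ intros; simpl. ring. }
    assert (I1 := UC_Iok m _ (HUC eps He)).
    destruct (iterE_minus m (U eps) (fun _ => c) I1 (Iok_const m c)) as [_ E].
    rewrite E, iterE_const. unfold c. ring.
  - intros HN. specialize (P3 HN 2%nat ltac:(exists 1%nat; reflexivity)).
    eapply bigO_ext; [|exact P3]. intros e. simpl (2 + 2)%nat.
    rewrite E_T1sq. rewrite Cmult_assoc. rewrite <- RtoC_mult. reflexivity.
  - intros HN n _ Hn. specialize (P3 HN n Hn). eapply bigO_ext; [|exact P3]. intros e.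
    cbv beta. unfold Expect. f_equal. apply iterE_ext. intros w _. rewrite T1_eq. reflexivity.
  - intros HN n Hn.
    assert (gC := good_Cf m D).
    destruct (G_odd_bound m (Tq m D 1) B' (Cf m D) gA gB' gC (T1_odd m D) pB' (Cf_odd m D) n Hn) as [Kg [HKg HG]].
    assert (HP := part_gen m N U u0 D Kt et ec 3 (Cf m D) n
       (fun e => Cmult (Cmult (RtoC e) (RtoC (INR n))) (iterE m (fun w => Cmult (Cpow (Tq m D 1 w) (n - 1)) (B' w)))) Kg
       Het Hec Ht HUC HN gC (Cf_odd m D) (tt3 m D) HKg
       ltac:(intros e He; specialize (HG e); rewrite Rabs_right in HG by lra; apply HG; lra)).
    eapply bigO_ext; [|replace (n + 3)%nat with (n + 3)%nat by reflexivity; exact HP].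
    intros e.
    assert (Hn0 : (0 < n)%nat) by (destruct Hn as [k' ->]; lia).
    rewrite binom_n1 by auto.
    cbv beta. unfold Expect.
    replace (iterE m (fun w => Cmult (Cpow (Tq m D 1 w) (n - 1)) (B' w))) with
      (iterE m (fun w => Cmult (Cpow (csum m (fun i => Cmult (RtoC (w i)) (D (i :: nil)))) (n - 1))
               (Cminus (Cmult (RtoC (/ INR (fact 2))) (csum m (fun i => csum m (fun j => Cmult (RtoC (w i * w j)) (D (i :: j :: nil))))))
                  (Cmult (RtoC (/ INR (fact 3))) (csum m (fun i => D (i :: i :: nil))))))).
    2:{ apply iterE_ext. intros w _. rewrite T1_eq. unfold B'. rewrite E_Bf. unfold Bf. rewrite T2_eq, INR_fact2. reflexivity. }
    replace (e ^ (n + 1) * INR n) with (e ^ n * e * INR n) by (rewrite pow_add; simpl; ring).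
    rewrite !RtoC_mult. ring.
Qed.
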